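(* Let $p>1$, $q>1$ with $p^{-1}+q^{-1}>1$. Then the following holds, with a constant $C_{p,q}$ depending only on $p$ and $q$. For every interval $[a;b]$ and every two functions $f,g:[a;b]\to\mathbb{R}$ with no common points of discontinuity such that $f$ has finite $p$-variation and $g$ has finite $q$-variation on $[a;b]$, the Riemann–Stieltjes integral $\int_a^b f\,\mathrm{d}g$ exists and \[ \left|\int_a^b f\,\mathrm{d}g-f(a)\left[g(b)-g(a)\right]\right|\le C_{p,q}\,\|f\|_{p\text{-var},[a;b]}^{\,p-p/q}\,\|f\|_{\mathrm{osc},[a;b]}^{\,1+p/q-p}\,\|g\|_{q\text{-var},[a;b]}. \]
   Context: For $r>0$ the $r$-variation of $h:[a;b]\to\mathbb{R}$ is $V^{r}(h,[a;b])=\sup_n\sup_{a\le t_1<\dots<t_n\le b}\sum_{i=2}^{n}|h(t_i)-h(t_{i-1})|^{r}$, and $\|h\|_{r\text{-var},[a;b]}:=(V^{r}(h,[a;b]))^{1/r}$. Also $\|h\|_{\mathrm{osc},[a;b]}:=\sup_{a\le s<t\le b}|h(t)-h(s)|$. The Riemann–Stieltjes integral $\int_a^b f\,\mathrm{d}g$ exists if the sums $\sum_i f(\nu_i)[g(a_i)-g(a_{i-1})]$ over partitions $a=a_0<\dots<a_l=b$ with tags $\nu_i\in[a_{i-1};a_i]$ converge to a common limit as the mesh tends to $0$, independently of the tags. *)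

(* Defs.v *)
From Stdlib Require Import Reals Lra.
From Coquelicot Require Import Coquelicot.
Open Scope R_scope.

(* x^y for x >= 0 with the convention 0^y = 0 (used only with y > 0). *)
Definition rpow (x y : R) : R := if Rlt_dec 0 x then Rpower x y else 0.

Fixpoint sumR (n : nat) (F : nat -> R) : R :=
  match n with O => 0 | S k => sumR k F + F k end.

(* Sums sum_{i=2}^{n} |h(t_i)-h(t_{i-1})|^r over a <= t_1 < ... < t_n <= b
   (points indexed here as t 0 < ... < t n, i.e. n steps). *)
Definition rvar_sums (r : R) (h : R -> R) (a b : R) (s : R) : Prop :=
  exists (n : nat) (t : nat -> R),
    a <= t O /\ t n <= b /\ (forall i, (i < n)%nat -> t i < t (S i)) /\
    s = sumR n (fun i => rpow (Rabs (h (t (S i)) - h (t i))) r).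

Definition rvar (r : R) (h : R -> R) (a b : R) : Rbar := Lub_Rbar (rvar_sums r h a b).

Definition finite_rvar (r : R) (h : R -> R) (a b : R) : Prop := is_finite (rvar r h a b).

Definition rvar_norm (r : R) (h : R -> R) (a b : R) : R := rpow (real (rvar r h a b)) (/ r).

Definition osc_norm (h : R -> R) (a b : R) : R :=
  real (Lub_Rbar (fun d => exists s t, a <= s /\ s < t /\ t <= b /\ d = Rabs (h t - h s))).

Definition cont_in (h : R -> R) (a b x : R) : Prop :=
  forall eps, 0 < eps -> exists delta, 0 < delta /\
    forall y, a <= y <= b -> Rabs (y - x) < delta -> Rabs (h y - h x) < eps.

Definition is_RS_integral (f g : R -> R) (a b I : R) : Prop :=
  forall eps, 0 < eps -> exists delta, 0 < delta /\
    forall (l : nat) (x nu : nat -> R),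
      x O = a -> x l = b ->
      (forall i, (i < l)%nat -> x i < x (S i)) ->
      (forall i, (i < l)%nat -> x i <= nu i <= x (S i)) ->
      (forall i, (i < l)%nat -> x (S i) - x i < delta) ->
      Rabs (sumR l (fun i => f (nu i) * (g (x (S i)) - g (x i))) - I) < eps.

(* Main.v *)
Require Import Defs.
From Stdlib Require Import Reals Lra Lia ZArith Classical ClassicalEpsilon.
From Coquelicot Require Import Coquelicot.
Open Scope R_scope.


Lemma sumR_ext n F G : (forall i, (i < n)%nat -> F i = G i) -> sumR n F = sumR n G.
Proof. induction n; simpl; intros H; auto. rewrite IHn by (intros; apply H; lia). rewrite H by lia; auto. Qed.

Lemma sumR_le n F G : (forall i, (i < n)%nat -> F i <= G i) -> sumR n F <= sumR n G.
Proof. induction n; simpl; intros H; [lra|]. assert (H1 := H n (Nat.lt_succ_diag_r n)).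
 assert (sumR n F <= sumR n G) by (apply IHn; intros; apply H; lia). lra. Qed.

Lemma sumR_nonneg n F : (forall i, (i < n)%nat -> 0 <= F i) -> 0 <= sumR n F.
Proof. intros H. replace 0 with (sumR n (fun _ => 0)). apply sumR_le; auto.
 induction n; simpl; auto. rewrite IHn; [lra|]. intros; apply H; lia. Qed.

Lemma sumR_plus n F G : sumR n (fun i => F i + G i) = sumR n F + sumR n G.
Proof. induction n; simpl; lra. Qed.

Lemma sumR_scal n c F : sumR n (fun i => c * F i) = c * sumR n F.
Proof. induction n; simpl; [ring|]. rewrite IHn; ring. Qed.

Lemma sumR_minus n F G : sumR n (fun i => F i - G i) = sumR n F - sumR n G.
Proof. induction n; simpl; lra. Qed.

Lemma sumR_const n c : sumR n (fun _ => c) = INR n * c.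
Proof. induction n; simpl sumR; [simpl; ring|]. rewrite IHn, S_INR; ring. Qed.

Lemma sumR_split n k F : sumR (n + k) F = sumR n F + sumR k (fun i => F (n + i)%nat).
Proof. induction k; simpl. rewrite Nat.add_0_r; ring. rewrite Nat.add_succ_r; simpl. rewrite IHk; ring. Qed.

Lemma sumR_shift1 n F : sumR (S n) F = F O + sumR n (fun i => F (S i)).
Proof. induction n; simpl in *; [ring|]. rewrite IHn; ring. Qed.

Lemma sumR_abs n F : Rabs (sumR n F) <= sumR n (fun i => Rabs (F i)).
Proof. induction n; simpl. rewrite Rabs_R0; lra.
 eapply Rle_trans. apply Rabs_triang. lra. Qed.

Lemma sumR_mono_n n n' F : (forall i, 0 <= F i) -> (n <= n')%nat -> sumR n F <= sumR n' F.
Proof. intros H Hn. replace n' with (n + (n' - n))%nat by lia. rewrite sumR_split.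
 assert (0 <= sumR (n' - n) (fun i => F (n + i)%nat)) by (apply sumR_nonneg; auto). lra. Qed.

Lemma sumR_remove n i F : (i <= n)%nat ->
  sumR (S n) F = sumR n (fun j => F (if Nat.ltb j i then j else S j)) + F i.
Proof. intros Hi. replace (S n) with (i + (S (n - i)))%nat by lia.
 replace n with (i + (n - i))%nat at 2 by lia. rewrite !sumR_split.
 rewrite (sumR_ext i (fun j => F (if Nat.ltb j i then j else S j)) F).
 2:{ intros j Hj. destruct (Nat.ltb_spec j i); auto; lia. }
 rewrite sumR_shift1. rewrite Nat.add_0_r.
 rewrite (sumR_ext (n - i) (fun j => F (if Nat.ltb (i + j) i then (i + j)%nat else S (i + j)))
   (fun j => F (i + S j)%nat)). ring.
 intros j Hj. destruct (Nat.ltb_spec (i+j) i). lia. f_equal; lia. Qed.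

Lemma sumR_pos n F : (forall i, (i < n)%nat -> 0 <= F i) -> (exists i, (i < n)%nat /\ 0 < F i) -> 0 < sumR n F.
Proof. induction n; intros H [i [Hi Fi]]. lia. simpl.
 destruct (Nat.eq_dec i n). subst. assert (0 <= sumR n F) by (apply sumR_nonneg; intros; apply H; lia). lra.
 assert (0 < sumR n F). apply IHn. intros; apply H; lia. exists i; split; auto; lia.
 assert (0 <= F n) by (apply H; lia). lra. Qed.

Lemma rpow_ge0 x y : 0 <= rpow x y.
Proof. unfold rpow. destruct (Rlt_dec 0 x). unfold Rpower. left; apply exp_pos. lra. Qed.

Lemma rpow_pos x y : 0 < x -> rpow x y = Rpower x y.
Proof. unfold rpow. destruct (Rlt_dec 0 x); auto; lra. Qed.

Lemma rpow_gt0 x y : 0 < x -> 0 < rpow x y.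
Proof. intros; rewrite rpow_pos; auto. unfold Rpower; apply exp_pos. Qed.

Lemma rpow_0 y : rpow 0 y = 0.
Proof. unfold rpow. destruct (Rlt_dec 0 0); lra. Qed.

Lemma rpow_le x y e : 0 <= x <= y -> 0 < e -> rpow x e <= rpow y e.
Proof. intros [H0 H1] He. destruct (Req_dec x 0). subst. rewrite rpow_0; apply rpow_ge0.
 rewrite !rpow_pos by lra. apply Rle_Rpower_l; lra. Qed.

Lemma rpow_lt x y e : 0 <= x < y -> 0 < e -> rpow x e < rpow y e.
Proof. intros [H0 H1] He. destruct (Req_dec x 0). subst. rewrite rpow_0; apply rpow_gt0; lra.
 rewrite !rpow_pos by lra. apply Rlt_Rpower_l; lra. Qed.

Lemma rpow_mult x y e : 0 <= x -> 0 <= y -> rpow (x * y) e = rpow x e * rpow y e.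
Proof. intros Hx Hy. destruct (Req_dec x 0). subst. rewrite Rmult_0_l, !rpow_0; ring.
 destruct (Req_dec y 0). subst. rewrite Rmult_0_r, !rpow_0; ring.
 rewrite !rpow_pos by (try apply Rmult_lt_0_compat; lra). rewrite Rpower_mult_distr; auto; lra. Qed.

Lemma rpow_rpow x a b : 0 <= x -> rpow (rpow x a) b = rpow x (a * b).
Proof. intros Hx. destruct (Req_dec x 0). subst. rewrite !rpow_0; auto.
 rewrite (rpow_pos x a) by lra. rewrite rpow_pos. rewrite Rpower_mult, rpow_pos; auto; lra.
 unfold Rpower; apply exp_pos. Qed.

Lemma rpow_1 x : 0 <= x -> rpow x 1 = x.
Proof. intros Hx. destruct (Req_dec x 0). subst; apply rpow_0. rewrite rpow_pos by lra; apply Rpower_1; lra. Qed.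

Lemma rpow_plus x a b : 0 < x -> rpow x (a + b) = rpow x a * rpow x b.
Proof. intros; rewrite !rpow_pos by auto; apply Rpower_plus. Qed.

Lemma rpow_inv_le x X e : 0 <= x -> 0 < e -> rpow x e <= X -> x <= rpow X (/ e).
Proof. intros Hx He H. rewrite <- (rpow_1 x) by auto. replace 1 with (e * / e) by (field; lra).
 rewrite <- rpow_rpow by auto. apply rpow_le. split; auto; apply rpow_ge0. apply Rinv_0_lt_compat; auto. Qed.

Lemma rpow_inv_le2 x X e : 0 <= x -> 0 <= X -> 0 < e -> x <= rpow X (/ e) -> rpow x e <= X.
Proof. intros Hx HX He H. apply Rle_trans with (rpow (rpow X (/e)) e). apply rpow_le; auto; lra.
 rewrite rpow_rpow by auto. replace (/ e * e) with 1 by (field; lra). rewrite rpow_1; lra. Qed.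

Lemma rpow_div x y e : 0 <= x -> 0 < y -> rpow (x / y) e = rpow x e / rpow y e.
Proof. intros Hx Hy. destruct (Req_dec x 0). subst. unfold Rdiv; rewrite Rmult_0_l, !rpow_0; ring.
 rewrite !rpow_pos; try (apply Rdiv_lt_0_compat); try lra. unfold Rdiv.
 rewrite <- Rpower_mult_distr; try lra. 2: apply Rinv_0_lt_compat; lra. f_equal.
 unfold Rpower. rewrite ln_Rinv by lra. rewrite <- exp_Ropp. f_equal; ring. Qed.

Lemma rpow_neg x e : 0 < x -> rpow x (- e) = / rpow x e.
Proof. intros. rewrite !rpow_pos by auto. unfold Rpower. rewrite <- exp_Ropp. f_equal; ring. Qed.

Lemma rpow_le_exp x a b : 1 <= x -> a <= b -> rpow x a <= rpow x b.
Proof. intros. rewrite !rpow_pos by lra. apply Rle_Rpower; auto. Qed.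

Lemma rpow_0e x : 0 < x -> rpow x 0 = 1.
Proof. intros; rewrite rpow_pos by auto; apply Rpower_O; auto. Qed.

Lemma pow_mvt x y e : 0 < x < y -> exists c, x < c < y /\
  rpow y e - rpow x e = e * rpow c (e - 1) * (y - x).
Proof. intros [Hx Hxy].
 destruct (MVT_cor2 (fun z => Rpower z e) (fun z => e * Rpower z (e - 1)) x y Hxy) as [c [Hc1 Hc2]].
 intros c Hc. apply derivable_pt_lim_power; lra.
 exists c; split; auto. rewrite !rpow_pos by lra. rewrite Hc1; ring. Qed.

Lemma rpow_neg_anti x y e : 0 < x <= y -> 0 < e -> rpow y (- e) <= rpow x (- e).
Proof. intros Hxy He. rewrite !rpow_neg by lra. apply Rinv_le_contravar. apply rpow_gt0; lra.
 apply rpow_le; lra. Qed.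

Lemma rpow_1l e : rpow 1 e = 1.
Proof. rewrite rpow_pos by lra. unfold Rpower. rewrite ln_1, Rmult_0_r; apply exp_0. Qed.

Lemma INR_S_pos i : 0 < INR (S i).
Proof. apply lt_0_INR; lia. Qed.

Lemma sum_pow_small g K : 0 < g < 1 ->
  sumR K (fun i => rpow (INR (S i)) (- g)) <= rpow (INR K) (1 - g) / (1 - g).
Proof. intros Hg. induction K. simpl. rewrite rpow_0. unfold Rdiv; lra.
 cbn [sumR]. destruct K.
 - simpl. rewrite !rpow_1l. apply Rmult_le_reg_r with (1 - g). lra.
   field_simplify; lra.
 - assert (H : (1 - g) * rpow (INR (S (S K))) (- g) <= rpow (INR (S (S K))) (1 - g) - rpow (INR (S K)) (1 - g)).
   { destruct (pow_mvt (INR (S K)) (INR (S (S K))) (1 - g)) as [c [Hc Heq]].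
     split. apply INR_S_pos. apply lt_INR; lia.
     rewrite Heq. replace (1 - g - 1) with (- g) by ring.
     replace (INR (S (S K)) - INR (S K)) with 1 by (rewrite (S_INR (S K)); ring).
     assert (rpow (INR (S (S K))) (- g) <= rpow c (- g)). apply rpow_neg_anti;
     try (assert (0 < INR (S K)) by apply INR_S_pos; split; lra); try lra.
     rewrite Rmult_1_r; apply Rmult_le_compat_l; lra. }
   apply Rle_trans with (rpow (INR (S K)) (1 - g) / (1 - g) + rpow (INR (S (S K))) (- g)). lra.
   apply Rmult_le_reg_r with (1 - g). lra. unfold Rdiv. rewrite Rmult_plus_distr_r.
   rewrite !Rmult_assoc, Rinv_l by lra. lra. Qed.

Lemma sum_pow_tail s K N : 1 < s -> (1 <= K)%nat ->
  sumR N (fun i => rpow (INR (K + S i)) (- s)) <= (rpow (INR K) (1 - s) - rpow (INR (K + N)) (1 - s)) / (s - 1).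
Proof. intros Hs HK. induction N. simpl. rewrite Nat.add_0_r. unfold Rdiv. lra.
 cbn [sumR].
 assert (H : (s - 1) * rpow (INR (K + S N)) (- s) <= rpow (INR (K + N)) (1 - s) - rpow (INR (K + S N)) (1 - s)).
 { destruct (pow_mvt (INR (K + N)) (INR (K + S N)) (1 - s)) as [c [Hc Heq]].
   split. apply lt_0_INR; lia. apply lt_INR; lia.
   replace (rpow (INR (K + N)) (1 - s) - rpow (INR (K + S N)) (1 - s)) with
     (- (rpow (INR (K + S N)) (1 - s) - rpow (INR (K + N)) (1 - s))) by ring.
   rewrite Heq. replace (1 - s - 1) with (- s) by ring.
   replace (INR (K + S N) - INR (K + N)) with 1 by (rewrite Nat.add_succ_r, S_INR; ring).
   assert (rpow (INR (K + S N)) (- s) <= rpow c (- s)). apply rpow_neg_anti;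
   try (assert (0 < INR (K + N)) by (apply lt_0_INR; lia); split; lra); try lra.
   rewrite Rmult_1_r. replace (- ((1 - s) * rpow c (- s))) with ((s - 1) * rpow c (- s)) by ring.
   apply Rmult_le_compat_l; lra. }
 apply Rle_trans with ((rpow (INR K) (1 - s) - rpow (INR (K + N)) (1 - s)) / (s - 1) + rpow (INR (K + S N)) (- s)). lra.
 apply Rmult_le_reg_r with (s - 1). lra. unfold Rdiv. rewrite Rmult_plus_distr_r.
 rewrite !Rmult_assoc, Rinv_l by lra. lra. Qed.

Lemma sum_pow_big s N : 1 < s -> sumR N (fun i => rpow (INR (S i)) (- s)) <= s / (s - 1).
Proof. intros Hs. destruct N. simpl. apply Rlt_le, Rdiv_lt_0_compat; lra.
 rewrite sumR_shift1. simpl (INR 1). rewrite rpow_1l.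
 assert (H := sum_pow_tail s 1 N Hs (le_n 1)). simpl (INR 1) in H. rewrite rpow_1l in H.
 assert (0 <= rpow (INR (1 + N)) (1 - s)) by apply rpow_ge0.
 replace (fun i => rpow (INR (S (S i))) (- s)) with (fun i => rpow (INR (1 + S i)) (- s)) by reflexivity.
 apply Rle_trans with (1 + (1 - 0) / (s - 1)). apply Rplus_le_compat_l. eapply Rle_trans. apply H.
 unfold Rdiv. apply Rmult_le_compat_r. apply Rlt_le, Rinv_0_lt_compat; lra. lra.
 apply Req_le. field. lra. Qed.

Lemma ceil_nat x : 0 <= x -> exists K : nat, x <= INR K <= x + 1.
Proof. intros Hx. destruct (archimed x) as [H1 H2]. exists (Z.to_nat (up x)).
 assert (0 <= up x)%Z. { apply le_IZR. lra. }
 rewrite INR_IZR_INZ, Z2Nat.id by auto. lra. Qed.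

Lemma rpow_ratio_split O X a : 0 < O -> 0 < X -> O * rpow (X / O) a = rpow O (1 - a) * rpow X a.
Proof. intros HO HX. rewrite rpow_div by lra. unfold Rminus. rewrite rpow_plus, rpow_neg, rpow_1 by lra.
 field. apply Rgt_not_eq, rpow_gt0; auto. Qed.

Lemma F1sum p q e s O X Y N : 1 < p -> 1 < q -> e = 1 - / q -> s = / p + / q -> 1 < s ->
  0 < O -> O <= X -> 0 <= Y ->
  sumR N (fun i => Rmin O (X * rpow (INR (S i)) (- / p)) * (Y * rpow (INR (S i)) (- / q)))
  <= (rpow 2 e / e + / (s - 1)) * (rpow O (1 - p * e) * rpow X (p * e) * Y).
Proof.
 intros Hp Hq He Hs Hs1 HO HOX HY.
 assert (HX : 0 < X) by lra.
 assert (Hq' : 0 < / q < 1). { split. apply Rinv_0_lt_compat; lra. rewrite <- Rinv_1. apply Rinv_lt_contravar; lra. }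
 assert (Hp' : 0 < / p < 1). { split. apply Rinv_0_lt_compat; lra. rewrite <- Rinv_1. apply Rinv_lt_contravar; lra. }
 assert (He0 : 0 < e < 1) by lra.
 set (u := X / O). assert (Hu : 1 <= u). { unfold u. apply Rmult_le_reg_r with O; auto. unfold Rdiv. rewrite Rmult_assoc, Rinv_l; lra. }
 set (x := rpow u p). assert (Hx : 1 <= x). { unfold x. rewrite <- (rpow_1l p). apply rpow_le; lra. }
 destruct (ceil_nat x) as [K [HK1 HK2]]. lra.
 assert (HK : (1 <= K)%nat). { destruct K. simpl in HK1. lra. lia. }
 set (T := fun i => Rmin O (X * rpow (INR (S i)) (- / p)) * (Y * rpow (INR (S i)) (- / q))).
 assert (HT : forall i, 0 <= T i).
 { intros i. unfold T. apply Rmult_le_pos. apply Rmin_glb. lra. apply Rmult_le_pos. lra. apply rpow_ge0.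
   apply Rmult_le_pos. lra. apply rpow_ge0. }
 apply Rle_trans with (sumR (K + N) T). apply sumR_mono_n; auto; lia.
 rewrite sumR_split.
 assert (P1 : sumR K T <= rpow 2 e / e * (rpow O (1 - p * e) * rpow X (p * e) * Y)).
 { apply Rle_trans with (sumR K (fun i => O * Y * rpow (INR (S i)) (- / q))).
   apply sumR_le. intros i _. unfold T. rewrite <- Rmult_assoc. apply Rmult_le_compat_r. apply rpow_ge0.
   apply Rmult_le_compat_r; auto. apply Rmin_l.
   rewrite sumR_scal. eapply Rle_trans. apply Rmult_le_compat_l. apply Rmult_le_pos; lra.
   apply sum_pow_small. exact Hq'.
   replace (1 - / q) with e by lra.
   assert (rpow (INR K) e <= rpow 2 e * rpow u (p * e)).
   { rewrite <- rpow_rpow by lra. fold x. rewrite <- rpow_mult by lra. apply rpow_le; lra. }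
   assert (E : O * rpow u (p * e) = rpow O (1 - p * e) * rpow X (p * e)) by (apply rpow_ratio_split; lra).
   apply Rle_trans with (O * Y * (rpow 2 e * rpow u (p * e)) / e).
   replace (O * Y * (rpow (INR K) e / e)) with (O * Y * rpow (INR K) e / e) by (field; lra).
   unfold Rdiv. apply Rmult_le_compat_r. apply Rlt_le, Rinv_0_lt_compat; lra. apply Rmult_le_compat_l; auto.
   apply Rmult_le_pos; lra.
   apply Req_le. rewrite <- E. field. lra. }
 assert (P2 : sumR N (fun i => T (K + i)%nat) <= / (s - 1) * (rpow O (1 - p * e) * rpow X (p * e) * Y)).
 { apply Rle_trans with (sumR N (fun i => X * Y * rpow (INR (K + S i)) (- s))).
   apply sumR_le. intros i _. unfold T. rewrite <- Nat.add_succ_r.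
   rewrite Hs, Ropp_plus_distr, rpow_plus by (apply lt_0_INR; lia).
   replace (X * Y * (rpow (INR (K + S i)) (- / p) * rpow (INR (K + S i)) (- / q))) with
     ((X * rpow (INR (K + S i)) (- / p)) * (Y * rpow (INR (K + S i)) (- / q))) by ring.
   apply Rmult_le_compat_r. apply Rmult_le_pos. lra. apply rpow_ge0. apply Rmin_r.
   rewrite sumR_scal. eapply Rle_trans. apply Rmult_le_compat_l. apply Rmult_le_pos; lra.
   apply sum_pow_tail; auto.
   assert (rpow (INR K) (1 - s) <= rpow x (1 - s)).
   { replace (1 - s) with (- (s - 1)) by ring. apply rpow_neg_anti; lra. }
   assert (0 <= rpow (INR (K + N)) (1 - s)) by apply rpow_ge0.
   assert (E : X * rpow x (1 - s) = rpow O (1 - p * e) * rpow X (p * e)).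
   { unfold x. rewrite rpow_rpow by lra. unfold u.
     replace X with (O * (X / O)) at 1 by (field; lra).
     rewrite Rmult_assoc, <- (rpow_1 (X / O)) at 1 by (apply Rlt_le, Rdiv_lt_0_compat; lra).
     rewrite <- rpow_plus by (apply Rdiv_lt_0_compat; lra). rewrite rpow_ratio_split by lra.
     f_equal; f_equal; subst; field; lra. }
   apply Rle_trans with (X * Y * rpow x (1 - s) / (s - 1)).
   unfold Rdiv. rewrite <- Rmult_assoc. apply Rmult_le_compat_r. apply Rlt_le, Rinv_0_lt_compat; lra.
   apply Rmult_le_compat_l. apply Rmult_le_pos; lra. lra.
   apply Req_le. replace (X * Y * rpow x (1 - s)) with ((X * rpow x (1 - s)) * Y) by ring. rewrite E. field. lra. }
 lra. Qed.

Definition Lsum (f g : R -> R) (t : nat -> R) n := sumR n (fun i => f (t i) * (g (t (S i)) - g (t i))).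
Definition psum r (h : R -> R) (t : nat -> R) n := sumR n (fun i => rpow (Rabs (h (t (S i)) - h (t i))) r).
Definition inc (t : nat -> R) n := forall i, (i < n)%nat -> t i < t (S i).
Definition rm (t : nat -> R) i := fun j => if Nat.ltb j i then t j else t (S j).

Lemma inc_mono t n i j : inc t n -> (i < j)%nat -> (j <= n)%nat -> t i < t j.
Proof. intros H Hij Hj. induction j. lia. destruct (Nat.eq_dec i j). subst. apply H; lia.
 apply Rlt_trans with (t j). apply IHj; lia. apply H; lia. Qed.

Lemma inc_mono_le t n i j : inc t n -> (i <= j)%nat -> (j <= n)%nat -> t i <= t j.
Proof. intros H Hij Hj. destruct (Nat.eq_dec i j). subst; lra. left; apply (inc_mono t n); auto; lia. Qed.

Lemma inc_rm t n i : inc t n -> (0 < i < n)%nat -> inc (rm t i) (n - 1).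
Proof. intros H Hi j Hj. unfold rm. destruct (Nat.ltb_spec j i); destruct (Nat.ltb_spec (S j) i).
 apply H; lia. apply (inc_mono t n); auto; lia. lia. apply H; lia. Qed.

Lemma Lsum_rm f g t n i : (0 < i < n)%nat ->
  Lsum f g t n - Lsum f g (rm t i) (n - 1) = (f (t i) - f (t (i - 1)%nat)) * (g (t (S i)) - g (t i)).
Proof. intros Hi. unfold Lsum.
 destruct i as [|i0]. lia. replace (S i0 - 1)%nat with i0 by lia.
 replace n with (i0 + S (S (n - i0 - 2)))%nat at 1 by lia.
 replace (n - 1)%nat with (i0 + S (n - i0 - 2))%nat by lia.
 rewrite !sumR_split. rewrite !sumR_shift1.
 set (k := (n - i0 - 2)%nat).
 rewrite (sumR_ext i0 (fun i => f (rm t (S i0) i) * (g (rm t (S i0) (S i)) - g (rm t (S i0) i)))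
   (fun i => f (t i) * (g (t (S i)) - g (t i)))).
 2:{ intros j Hj. unfold rm. destruct (Nat.ltb_spec j (S i0)); destruct (Nat.ltb_spec (S j) (S i0)); auto; lia. }
 rewrite (sumR_ext k (fun i => f (rm t (S i0) (i0 + S i)%nat) * (g (rm t (S i0) (S (i0 + S i))) - g (rm t (S i0) (i0 + S i)%nat)))
   (fun i => f (t (i0 + S (S i))%nat) * (g (t (S (i0 + S (S i)))) - g (t (i0 + S (S i))%nat)))).
 2:{ intros j Hj. unfold rm. destruct (Nat.ltb_spec (i0 + S j) (S i0)); destruct (Nat.ltb_spec (S (i0 + S j)) (S i0)); try lia.
     repeat f_equal; lia. }
 unfold rm. rewrite Nat.add_0_r.
 destruct (Nat.ltb_spec i0 (S i0)); try lia. destruct (Nat.ltb_spec (S i0) (S i0)); try lia.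
 replace (i0 + 1)%nat with (S i0) by lia. ring. Qed.

Fixpoint kb (s : nat -> nat) m i : bool := match m with O => Nat.eqb (s O) i | S m' => Nat.eqb (s m) i || kb s m' i end.

Lemma kb_spec s m i : kb s m i = true <-> exists j, (j <= m)%nat /\ s j = i.
Proof. induction m; simpl. rewrite Nat.eqb_eq. split. intros; exists O; split; auto.
 intros [j [Hj Hs]]. replace j with O in Hs by lia. auto.
 rewrite Bool.orb_true_iff, Nat.eqb_eq, IHm. split.
 intros [H|[j [Hj H]]]. exists (S m); split; auto. exists j; split; auto.
 intros [j [Hj H]]. destruct (Nat.eq_dec j (S m)). subst; auto. right; exists j; split; auto; lia. Qed.

Definition St (t : nat -> R) n (s : nat -> nat) m (P : nat -> R) :=
  inc t n /\ (forall j, (j < m)%nat -> (s j < s (S j))%nat) /\ s O = O /\ s m = n /\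
  (forall j, (j <= m)%nat -> t (s j) = P j).

Definition cnt (s : nat -> nat) m n := sumR (S n) (fun i => if kb s m i then 0 else 1).

Definition srm (s : nat -> nat) i := fun j => if Nat.ltb (s j) i then s j else pred (s j).

Lemma smono s m i j : (forall j, (j < m)%nat -> (s j < s (S j))%nat) -> (i < j)%nat -> (j <= m)%nat -> (s i < s j)%nat.
Proof. intros H Hij Hj. induction j. lia. destruct (Nat.eq_dec i j). subst. apply H; lia.
 apply Nat.lt_trans with (s j). apply IHj; lia. apply H; lia. Qed.

Lemma kb_false s m i : kb s m i = false -> forall j, (j <= m)%nat -> s j <> i.
Proof. intros H j Hj E. assert (kb s m i = true) by (apply kb_spec; exists j; auto). congruence. Qed.

Lemma St_rm t n s m P i : St t n s m P -> (0 < i < n)%nat -> kb s m i = false ->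
  St (rm t i) (n - 1) (srm s i) m P.
Proof. intros [Hinc [Hs [H0 [Hm HP]]]] Hi Hk. assert (Hne := kb_false s m i Hk).
 split. apply inc_rm; auto. split.
 - intros j Hj. unfold srm. assert (Hsj := Hs j Hj). assert (Hne1 := Hne j ltac:(lia)). assert (Hne2 := Hne (S j) ltac:(lia)).
   destruct (Nat.ltb_spec (s j) i); destruct (Nat.ltb_spec (s (S j)) i); lia.
 - split. unfold srm. rewrite H0. destruct (Nat.ltb_spec 0 i); lia.
   split. unfold srm. rewrite Hm. destruct (Nat.ltb_spec n i); lia.
   intros j Hj. rewrite <- (HP j Hj). unfold srm, rm. assert (Hne1 := Hne j Hj).
   destruct (Nat.ltb_spec (s j) i). destruct (Nat.ltb_spec (s j) i); auto; lia.
   destruct (Nat.ltb_spec (pred (s j)) i). lia. f_equal; lia. Qed.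

Lemma cnt_rm n s m i : (i <= n)%nat -> (1 <= n)%nat -> kb s m i = false ->
  cnt (srm s i) m (n - 1) + 1 = cnt s m n.
Proof. intros Hi Hn Hk. unfold cnt. rewrite (sumR_remove n i) by auto. rewrite Hk.
 replace (S (n - 1)) with n by lia. f_equal.
 apply sumR_ext. intros j Hj. assert (Hne := kb_false s m i Hk).
 assert (E : kb (srm s i) m j = kb s m (if Nat.ltb j i then j else S j)).
 { destruct (kb (srm s i) m j) eqn:E1; destruct (kb s m (if Nat.ltb j i then j else S j)) eqn:E2; auto.
   - apply kb_spec in E1. destruct E1 as [j0 [Hj0 E1]]. assert (Hn0 := Hne j0 Hj0).
     assert (kb s m (if Nat.ltb j i then j else S j) = true); [|congruence]. apply kb_spec. exists j0; split; auto.
     unfold srm in E1. destruct (Nat.ltb_spec (s j0) i); destruct (Nat.ltb_spec j i); lia.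
   - apply kb_spec in E2. destruct E2 as [j0 [Hj0 E2]].
     assert (kb (srm s i) m j = true); [|congruence]. apply kb_spec. exists j0; split; auto.
     unfold srm. destruct (Nat.ltb_spec (s j0) i); destruct (Nat.ltb_spec j i); lia. }
 rewrite E. auto. Qed.

Lemma St_base t n s m P : St t n s m P -> (forall i, (i <= n)%nat -> kb s m i = true) ->
  n = m /\ forall j, (j <= m)%nat -> t j = P j.
Proof. intros [Hinc [Hs [H0 [Hm HP]]]] Hall.
 assert (Hid : forall j, (j <= m)%nat -> s j = j).
 { induction j; intros Hj; auto. assert (IH := IHj ltac:(lia)).
   assert (Hsj := Hs j ltac:(lia)).
   assert (Hle : (s (S j) <= n)%nat). { rewrite <- Hm. destruct (Nat.eq_dec (S j) m). subst; lia. apply Nat.lt_le_incl, (smono s m); auto; lia. }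
   assert (HSj : (S j <= n)%nat) by lia.
   destruct (proj1 (kb_spec s m (S j)) (Hall _ HSj)) as [j' [Hj' Ej']].
   destruct (Nat.le_gt_cases j' j). destruct (Nat.eq_dec j' j). subst; lia.
   assert ((s j' < s j)%nat) by (apply (smono s m); auto; lia). lia.
   destruct (Nat.eq_dec j' (S j)). subst; auto.
   assert ((s (S j) < s j')%nat) by (apply (smono s m); auto; lia). lia. }
 split. rewrite <- Hm. apply Hid; lia. intros j Hj. rewrite <- (Hid j Hj) at 1. auto. Qed.

Lemma sumR_term n F j : (forall i, (i < n)%nat -> 0 <= F i) -> (j < n)%nat -> F j <= sumR n F.
Proof. intros H Hj. destruct n. lia. rewrite (sumR_remove n j) by lia.
 assert (0 <= sumR n (fun k => F (if Nat.ltb k j then k else S k))).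
 apply sumR_nonneg. intros k Hk. apply H. destruct (Nat.ltb_spec k j); lia. lra. Qed.

Lemma pigeon N (w : nat -> R) (Rb : nat -> bool) W k : (forall j, (j < N)%nat -> 0 <= w j) -> 0 <= W ->
  sumR N w <= W -> 1 <= k -> k <= sumR N (fun j => if Rb j then 0 else 1) ->
  exists j, (j < N)%nat /\ Rb j = false /\ k * w j <= W.
Proof. intros Hw HW Hs Hk Hc. apply NNPP. intros Hn.
 assert (Hall : forall j, (j < N)%nat -> Rb j = false -> k * w j > W).
 { intros j Hj Hb. apply Rnot_le_gt. intros Hle. apply Hn. exists j; auto. }
 assert (Hex : exists j, (j < N)%nat /\ Rb j = false).
 { apply NNPP. intros Hne. assert (sumR N (fun j => if Rb j then 0 else 1) = 0).
   { transitivity (sumR N (fun _ => 0)). apply sumR_ext. intros j Hj.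
     destruct (Rb j) eqn:E; auto. exfalso; apply Hne; exists j; auto. rewrite sumR_const; ring. } lra. }
 assert (Hpos : 0 < sumR N (fun j => if Rb j then 0 else (k * w j - W))).
 { apply sumR_pos. intros j Hj. destruct (Rb j) eqn:E. lra. assert (H := Hall j Hj E). lra.
   destruct Hex as [j [Hj E]]. exists j; split; auto. rewrite E. assert (H := Hall j Hj E). lra. }
 assert (E1 : sumR N (fun j => if Rb j then 0 else (k * w j - W)) =
   k * sumR N (fun j => if Rb j then 0 else w j) - W * sumR N (fun j => if Rb j then 0 else 1)).
 { rewrite <- sumR_scal, <- sumR_scal, <- sumR_minus. apply sumR_ext; intros j _. destruct (Rb j); ring. }
 assert (E2 : sumR N (fun j => if Rb j then 0 else w j) <= sumR N w).
 { apply sumR_le. intros j Hj. destruct (Rb j). apply Hw; auto. lra. }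
 assert (k * sumR N (fun j => if Rb j then 0 else w j) <= k * W).
 { apply Rmult_le_compat_l. lra. lra. }
 assert (W * k <= W * sumR N (fun j => if Rb j then 0 else 1)) by (apply Rmult_le_compat_l; lra).
 lra. Qed.

Lemma rpow_eq0 x e : 0 <= x -> rpow x e <= 0 -> x = 0.
Proof. intros Hx H. destruct (Req_dec x 0); auto. assert (0 < rpow x e) by (apply rpow_gt0; lra). lra. Qed.

Lemma psum_nonneg r h t n : 0 <= psum r h t n.
Proof. apply sumR_nonneg; intros; apply rpow_ge0. Qed.

Lemma greedy (f g : R -> R) a b p q A B (P : nat -> R) m (psi : nat -> R) :
  (forall t n, inc t n -> a <= t O -> t n <= b -> psum p f t n <= A) ->
  (forall t n, inc t n -> a <= t O -> t n <= b -> psum q g t n <= B) ->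
  0 <= A -> 0 <= B -> (forall k, 0 <= psi k) -> a <= P O -> P m <= b ->
  (forall t n s i k, St t n s m P -> (1 <= k)%nat -> (0 < i < n)%nat -> kb s m i = false ->
     rpow (Rabs (f (t i) - f (t (i - 1)%nat))) p <= 2 * A / INR k ->
     rpow (Rabs (g (t (S i)) - g (t i))) q <= 2 * B / INR k ->
     Rabs ((f (t i) - f (t (i - 1)%nat)) * (g (t (S i)) - g (t i))) <= psi k) ->
  forall K t n s, St t n s m P -> cnt s m n = INR K ->
  Rabs (Lsum f g t n - Lsum f g P m) <= sumR K (fun i => psi (S i)).
Proof.
 intros HA HB HA0 HB0 Hpsi0 Ha Hb Hpsi K. induction K; intros t n s HSt Hc.
 - simpl. destruct (St_base t n s m P HSt) as [En Et].
   { intros i Hi. destruct (kb s m i) eqn:E; auto. exfalso.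
     assert (0 < cnt s m n). { unfold cnt. apply sumR_pos. intros j _. destruct (kb s m j); lra.
       exists i; split. lia. rewrite E; lra. } simpl in Hc. lra. }
   subst n. unfold Lsum. rewrite (sumR_ext m _ (fun i => f (P i) * (g (P (S i)) - g (P i)))).
   rewrite Rminus_diag, Rabs_R0; lra. intros i Hi. rewrite !Et by lia. auto.
 - destruct HSt as [Hinc [Hs [H0 [Hm HP]]]] eqn:HSt'.
   assert (Hk0 : kb s m O = true) by (apply kb_spec; exists O; split; auto; lia).
   assert (Hkn : kb s m n = true) by (apply kb_spec; exists m; split; auto).
   assert (Hn : (1 <= n)%nat).
   { destruct n; [|lia]. exfalso. unfold cnt in Hc. rewrite S_INR in Hc. cbn [sumR] in Hc. rewrite Hk0 in Hc.
     assert (0 <= INR K) by apply pos_INR. lra. }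
   assert (Ht0 : a <= t O). { rewrite <- H0 at 1. rewrite HP by lia. auto. }
   assert (Htn : t n <= b). { rewrite <- Hm. rewrite HP by lia. auto. }
   set (N := (n - 1)%nat).
   set (w := fun j => rpow (Rabs (f (t (S j)) - f (t j))) p * B + rpow (Rabs (g (t (S (S j))) - g (t (S j)))) q * A).
   assert (Hw : forall j, (j < N)%nat -> 0 <= w j).
   { intros j _. unfold w. assert (0 <= rpow (Rabs (f (t (S j)) - f (t j))) p) by apply rpow_ge0.
     assert (0 <= rpow (Rabs (g (t (S (S j))) - g (t (S j)))) q) by apply rpow_ge0. nra. }
   assert (HpA : psum p f t N <= A).
   { apply Rle_trans with (psum p f t n). apply sumR_mono_n. intros; apply rpow_ge0. unfold N; lia. apply HA; auto. }
   assert (HqB : psum q g (fun j => t (S j)) N <= B).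
   { apply HB. intros j Hj. apply Hinc. unfold N in Hj; lia. apply Rle_trans with (t O); auto. left; apply Hinc; lia.
     unfold N. replace (S (n - 1)) with n by lia. auto. }
   assert (Hsw : sumR N w <= 2 * A * B).
   { unfold w. rewrite sumR_plus.
     rewrite (sumR_ext N (fun i => rpow (Rabs (f (t (S i)) - f (t i))) p * B) (fun i => B * rpow (Rabs (f (t (S i)) - f (t i))) p)) by (intros; ring).
     rewrite (sumR_ext N (fun i => rpow (Rabs (g (t (S (S i))) - g (t (S i)))) q * A) (fun i => A * rpow (Rabs (g (t (S (S i))) - g (t (S i)))) q)) by (intros; ring).
     rewrite !sumR_scal. fold (psum p f t N). fold (psum q g (fun j => t (S j)) N).
     assert (B * psum p f t N <= B * A) by (apply Rmult_le_compat_l; auto).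
     assert (A * psum q g (fun j => t (S j)) N <= A * B) by (apply Rmult_le_compat_l; auto). lra. }
   assert (Hcnt : sumR N (fun j => if kb s m (S j) then 0 else 1) = cnt s m n).
   { unfold cnt. rewrite sumR_shift1. rewrite Hk0.
     replace (sumR n (fun i => if kb s m (S i) then 0 else 1)) with (sumR (S N) (fun i => if kb s m (S i) then 0 else 1)) by (f_equal; unfold N; lia).
     cbn [sumR]. replace (S N) with n by (unfold N; lia). rewrite Hkn. ring. }
   destruct (pigeon N w (fun j => kb s m (S j)) (2 * A * B) (INR (S K))) as [j [Hj [Hkj Hwj]]]; auto.
   { assert (0 <= A * B) by (apply Rmult_le_pos; auto). lra. }
   { rewrite S_INR. assert (0 <= INR K) by apply pos_INR. lra. }
   { rewrite Hcnt, Hc. lra. }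
   set (i := S j).
   assert (Hi : (0 < i < n)%nat) by (unfold i, N in *; lia).
   assert (Hi1 : (i - 1)%nat = j) by (unfold i; lia).
   assert (Hcost : Rabs ((f (t i) - f (t (i - 1)%nat)) * (g (t (S i)) - g (t i))) <= psi (S K)).
   { rewrite Hi1. unfold i.
     assert (Hu : rpow (Rabs (f (t (S j)) - f (t j))) p <= A).
     { eapply Rle_trans. 2: apply (HA t n); auto. unfold psum.
       apply (sumR_term n (fun i0 => rpow (Rabs (f (t (S i0)) - f (t i0))) p)). intros; apply rpow_ge0. lia. }
     assert (Hv : rpow (Rabs (g (t (S (S j))) - g (t (S j)))) q <= B).
     { eapply Rle_trans. 2: apply (HB t n); auto. unfold psum.
       apply (sumR_term n (fun i0 => rpow (Rabs (g (t (S i0)) - g (t i0))) q)). intros; apply rpow_ge0. lia. }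
     destruct (Req_dec A 0) as [EA|NA].
     { rewrite EA in Hu. apply rpow_eq0 in Hu; [|apply Rabs_pos]. rewrite Rabs_mult, Hu, Rmult_0_l. auto. }
     destruct (Req_dec B 0) as [EB|NB].
     { rewrite EB in Hv. apply rpow_eq0 in Hv; [|apply Rabs_pos]. rewrite Rabs_mult, Hv, Rmult_0_r. auto. }
     assert (HkR : 0 < INR (S K)) by apply INR_S_pos.
     assert (Hu0 : 0 <= rpow (Rabs (f (t (S j)) - f (t j))) p) by apply rpow_ge0.
     assert (Hv0 : 0 <= rpow (Rabs (g (t (S (S j))) - g (t (S j)))) q) by apply rpow_ge0.
     unfold w in Hwj.
     pose proof (Hpsi t n s (S j) (S K)) as HH. replace (S j - 1)%nat with j in HH by lia.
     apply HH; auto; try lia.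
     + apply Rmult_le_reg_r with (INR (S K) * B). apply Rmult_lt_0_compat; lra.
       unfold Rdiv. replace (2 * A * / INR (S K) * (INR (S K) * B)) with (2 * A * B) by (field; lra).
       assert (0 <= INR (S K) * (rpow (Rabs (g (t (S (S j))) - g (t (S j)))) q * A)).
       apply Rmult_le_pos; [lra| apply Rmult_le_pos; lra].
       match type of Hwj with ?k * (?u * ?B + ?v * ?A) <= _ => assert (k * (u * B + v * A) = u * (k * B) + k * (v * A)) by ring end. lra.
     + apply Rmult_le_reg_r with (INR (S K) * A). apply Rmult_lt_0_compat; lra.
       unfold Rdiv. replace (2 * B * / INR (S K) * (INR (S K) * A)) with (2 * A * B) by (field; lra).
       assert (0 <= INR (S K) * (rpow (Rabs (f (t (S j)) - f (t j))) p * B)).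
       apply Rmult_le_pos; [lra| apply Rmult_le_pos; lra].
       match type of Hwj with ?k * (?u * ?B + ?v * ?A) <= _ => assert (k * (u * B + v * A) = v * (k * A) + k * (u * B)) by ring end. lra. }
   assert (HSt2 := St_rm t n s m P i HSt Hi Hkj).
   assert (Hc2 : cnt (srm s i) m (n - 1) = INR K).
   { assert (E := cnt_rm n s m i ltac:(lia) Hn Hkj). rewrite Hc, S_INR in E. lra. }
   assert (IH := IHK _ _ _ HSt2 Hc2).
   assert (E := Lsum_rm f g t n i Hi).
   cbn [sumR].
   replace (Lsum f g t n - Lsum f g P m) with ((Lsum f g t n - Lsum f g (rm t i) (n - 1)) + (Lsum f g (rm t i) (n - 1) - Lsum f g P m)) by ring.
   eapply Rle_trans. apply Rabs_triang. rewrite E. lra.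
Qed.

Lemma count_nat n (F : nat -> bool) : exists K, sumR n (fun i => if F i then 0 else 1) = INR K.
Proof. induction n. exists O; auto. destruct IHn as [K HK]. cbn [sumR]. rewrite HK.
 destruct (F n). exists K; ring. exists (S K); rewrite S_INR; ring. Qed.

Lemma St_in t n s m P a b : St t n s m P -> a <= P O -> P m <= b -> forall i, (i <= n)%nat -> a <= t i <= b.
Proof. intros [Hinc [Hs [H0 [Hm HP]]]] Ha Hb i Hi.
 assert (t O = P O) by (rewrite <- H0 at 1; apply HP; lia).
 assert (t n = P m) by (rewrite <- Hm; apply HP; lia).
 split. apply Rle_trans with (t O). lra. apply (inc_mono_le t n); auto; lia.
 apply Rle_trans with (t n). apply (inc_mono_le t n); auto; lia. lra. Qed.

Lemma rpow_scale_k x k e : 0 <= x -> (1 <= k)%nat -> rpow (x / INR k) e = rpow x e * rpow (INR k) (- e).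
Proof. intros Hx Hk. assert (0 < INR k) by (apply lt_0_INR; lia). rewrite rpow_div by lra. rewrite rpow_neg by lra. unfold Rdiv; auto. Qed.

Definition Cyoung p q := let e := 1 - / q in let s := / p + / q in
  (rpow 2 e / e + / (s - 1)) * rpow 2 e * rpow 2 (/ q).

Lemma F1 (f g : R -> R) a b p q A B Om t n : 1 < p -> 1 < q -> / p + / q > 1 ->
  (forall t n, inc t n -> a <= t O -> t n <= b -> psum p f t n <= A) ->
  (forall t n, inc t n -> a <= t O -> t n <= b -> psum q g t n <= B) ->
  0 <= A -> 0 <= B -> 0 <= Om ->
  (forall x y, a <= x <= b -> a <= y <= b -> Rabs (f x - f y) <= Om) -> rpow Om p <= A ->
  inc t n -> (1 <= n)%nat -> t O = a -> t n = b ->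
  Rabs (Lsum f g t n - f a * (g b - g a)) <= Cyoung p q * (rpow Om (1 - p * (1 - / q)) * rpow A (1 - / q) * rpow B (/ q)).
Proof.
 intros Hp Hq Hs HA HB HA0 HB0 HO0 HO HOA Hinc Hn Ht0 Htn.
 set (e := 1 - / q). set (X := rpow (2 * A) (/ p)). set (Y := rpow (2 * B) (/ q)).
 set (psi := fun k => Rmin Om (X * rpow (INR k) (- / p)) * (Y * rpow (INR k) (- / q))).
 set (P := fun j : nat => match j with O => a | _ => b end).
 set (s := fun j : nat => match j with O => O | _ => n end).
 assert (Hab : a <= b). { rewrite <- Ht0, <- Htn. apply (inc_mono_le t n); auto; lia. }
 assert (HSt : St t n s 1 P).
 { split. exact Hinc. split. intros j Hj. replace j with O by lia. simpl; lia. split. reflexivity. split. reflexivity.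
   intros j Hj. destruct j; simpl; auto. }
 assert (HLP : Lsum f g P 1 = f a * (g b - g a)) by (unfold Lsum; simpl; ring).
 assert (Hpsi0 : forall k, 0 <= psi k).
 { intros k. unfold psi. apply Rmult_le_pos. apply Rmin_glb; auto. apply Rmult_le_pos; apply rpow_ge0.
   apply Rmult_le_pos; apply rpow_ge0. }
 destruct (count_nat (S n) (kb s 1)) as [K HK].
 assert (G := greedy f g a b p q A B P 1 psi HA HB HA0 HB0 Hpsi0 ltac:(simpl; lra) ltac:(simpl; lra)).
 assert (Hpsi : forall t0 n0 s0 i k, St t0 n0 s0 1 P -> (1 <= k)%nat -> (0 < i < n0)%nat -> kb s0 1 i = false ->
     rpow (Rabs (f (t0 i) - f (t0 (i - 1)%nat))) p <= 2 * A / INR k ->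
     rpow (Rabs (g (t0 (S i)) - g (t0 i))) q <= 2 * B / INR k ->
     Rabs ((f (t0 i) - f (t0 (i - 1)%nat)) * (g (t0 (S i)) - g (t0 i))) <= psi k).
 { intros t0 n0 s0 i k HSt0 Hk Hi Hkb Hu Hv.
   assert (Hin := St_in t0 n0 s0 1 P a b HSt0 ltac:(simpl; lra) ltac:(simpl; lra)).
   assert (Hk' : 0 < INR k) by (apply lt_0_INR; lia).
   unfold psi. rewrite Rabs_mult. apply Rmult_le_compat; try apply Rabs_pos.
   - apply Rmin_glb. apply HO; apply Hin; lia.
     apply rpow_inv_le in Hu; [|apply Rabs_pos|lra]. rewrite rpow_scale_k in Hu by (auto; lra). auto.
   - apply rpow_inv_le in Hv; [|apply Rabs_pos|lra]. rewrite rpow_scale_k in Hv by (auto; lra). auto. }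
 assert (Hb := G Hpsi K t n s HSt HK).
 rewrite HLP in Hb. eapply Rle_trans. apply Hb.
 destruct (Req_dec Om 0) as [E0|N0].
 - assert (sumR K (fun i => psi (S i)) = 0).
   { transitivity (sumR K (fun _ => 0)). apply sumR_ext. intros i _. unfold psi. rewrite E0.
     rewrite Rmin_left. ring. apply Rmult_le_pos. apply rpow_ge0. apply rpow_ge0. rewrite sumR_const; ring. }
   rewrite H. apply Rmult_le_pos. unfold Cyoung. simpl. repeat apply Rmult_le_pos; try apply rpow_ge0.
   assert (0 < / q < 1). { split. apply Rinv_0_lt_compat; lra. rewrite <- Rinv_1. apply Rinv_lt_contravar; lra. }
   assert (0 < rpow 2 (1 - / q) / (1 - / q)) by (apply Rdiv_lt_0_compat; [apply rpow_gt0|]; lra).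
   assert (0 < / (/ p + / q - 1)) by (apply Rinv_0_lt_compat; lra). lra.
   repeat apply Rmult_le_pos; apply rpow_ge0.
 - assert (HOX : Om <= X). { unfold X. apply rpow_inv_le. lra. lra. apply Rle_trans with A; lra. }
   assert (F := F1sum p q e (/ p + / q) Om X Y K Hp Hq eq_refl eq_refl Hs ltac:(lra) HOX ltac:(apply rpow_ge0)).
   eapply Rle_trans. apply F. unfold Cyoung. fold e.
   assert (E1 : rpow X (p * e) = rpow 2 e * rpow A e).
   { unfold X. rewrite rpow_rpow by lra. replace (/ p * (p * e)) with e by (field; lra). apply rpow_mult; lra. }
   assert (E2 : Y = rpow 2 (/ q) * rpow B (/ q)) by (unfold Y; apply rpow_mult; lra).
   rewrite E1, E2. apply Req_le. ring. Qed.

Lemma rvar_ub r h a b t n : finite_rvar r h a b -> inc t n -> a <= t O -> t n <= b ->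
  psum r h t n <= real (rvar r h a b).
Proof. intros Hf Hinc H0 Hn. unfold finite_rvar, rvar in *.
 destruct (Lub_Rbar_correct (rvar_sums r h a b)) as [Hub _].
 assert (Hs : rvar_sums r h a b (psum r h t n)). { exists n, t. repeat split; auto. }
 specialize (Hub _ Hs). rewrite <- Hf in Hub. simpl in Hub. auto. Qed.

Lemma rvar_ge0 r h a b : a <= b -> finite_rvar r h a b -> 0 <= real (rvar r h a b).
Proof. intros Hab Hf. replace 0 with (psum r h (fun _ => a) O) by reflexivity.
 apply rvar_ub; auto. intros i Hi; lia. lra. Qed.

Lemma one_step r h a b x y : finite_rvar r h a b -> a <= x -> x < y -> y <= b ->
  rpow (Rabs (h y - h x)) r <= real (rvar r h a b).
Proof. intros Hf Hx Hxy Hy. set (t := fun i : nat => match i with O => x | _ => y end).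
 assert (E : psum r h t 1 = rpow (Rabs (h y - h x)) r) by (unfold psum; simpl; ring).
 rewrite <- E. apply rvar_ub; auto. intros i Hi. replace i with O by lia. simpl; auto. Qed.

Lemma diff_bound r h a b x y : 0 < r -> finite_rvar r h a b -> a <= x <= b -> a <= y <= b ->
  Rabs (h x - h y) <= rpow (real (rvar r h a b)) (/ r).
Proof. intros Hr Hf Hx Hy. destruct (Rtotal_order x y) as [H|[H|H]].
 - apply rpow_inv_le; auto. apply Rabs_pos. rewrite Rabs_minus_sym. apply one_step; auto; lra.
 - subst. rewrite Rminus_diag, Rabs_R0. apply rpow_ge0.
 - apply rpow_inv_le; auto. apply Rabs_pos. apply one_step; auto; lra. Qed.

Definition oscset (f : R -> R) a b := fun d => exists s t, a <= s /\ s < t /\ t <= b /\ d = Rabs (f t - f s).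

Lemma osc_props p f a b : 0 < p -> a < b -> finite_rvar p f a b ->
  0 <= osc_norm f a b /\
  (forall x y, a <= x <= b -> a <= y <= b -> Rabs (f x - f y) <= osc_norm f a b) /\
  rpow (osc_norm f a b) p <= real (rvar p f a b).
Proof. intros Hp Hab Hf. set (M := rpow (real (rvar p f a b)) (/ p)).
 assert (HM : forall d, oscset f a b d -> d <= M).
 { intros d [s [t [H1 [H2 [H3 H4]]]]]. subst. apply diff_bound; auto; lra. }
 unfold osc_norm. fold (oscset f a b).
 destruct (Lub_Rbar_correct (oscset f a b)) as [Hub Hlub].
 assert (Hd0 : oscset f a b (Rabs (f b - f a))) by (exists a, b; repeat split; lra).
 assert (Hle : Rbar_le (Lub_Rbar (oscset f a b)) M). { apply Hlub. intros d Hd. simpl. apply HM; auto. }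
 assert (Hge := Hub _ Hd0).
 destruct (Lub_Rbar (oscset f a b)) as [l| |] eqn:E; simpl in Hle, Hge; try contradiction.
 simpl. assert (Hl0 : 0 <= l) by (eapply Rle_trans; [apply Rabs_pos| apply Hge]).
 split; auto. split.
 - intros x y Hx Hy. destruct (Rtotal_order x y) as [H|[H|H]].
   + rewrite Rabs_minus_sym. apply (Hub (Rabs (f y - f x))). exists x, y; repeat split; lra.
   + subst. rewrite Rminus_diag, Rabs_R0; auto.
   + apply (Hub (Rabs (f x - f y))). exists y, x; repeat split; lra.
 - apply rpow_inv_le2; auto. apply rvar_ge0; auto; lra. Qed.

Lemma abs_sub_le x y : Rabs (x - y) <= Rabs x + Rabs y.
Proof. unfold Rminus. eapply Rle_trans. apply Rabs_triang. rewrite Rabs_Ropp; lra. Qed.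

Lemma two_close (h : R -> R) t x y e : Rabs (h x - h t) < e -> Rabs (h y - h t) < e -> Rabs (h x - h y) <= 2 * e.
Proof. intros H1 H2. replace (h x - h y) with ((h x - h t) - (h y - h t)) by ring.
 eapply Rle_trans. apply abs_sub_le. lra. Qed.

Lemma eta_lemma (f g : R -> R) a b Mf Mg : 0 < Mf -> 0 < Mg ->
  (forall x y, a <= x <= b -> a <= y <= b -> Rabs (f x - f y) <= Mf) ->
  (forall x y, a <= x <= b -> a <= y <= b -> Rabs (g x - g y) <= Mg) ->
  (forall x, a <= x <= b -> cont_in f a b x \/ cont_in g a b x) ->
  forall eta, 0 < eta -> exists d, 0 < d /\ forall u v, a <= u -> v <= b -> v - u < d ->
  forall x y z w, u <= x <= v -> u <= y <= v -> u <= z <= v -> u <= w <= v ->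
  Rabs (f x - f y) * Rabs (g z - g w) <= eta.
Proof.
 intros HMf HMg Hf Hg Hc eta Heta.
 set (Q := fun t (dl : posreal) => a <= t <= b -> forall x y z w, a <= x <= b -> a <= y <= b -> a <= z <= b -> a <= w <= b ->
   Rabs (x - t) < dl -> Rabs (y - t) < dl -> Rabs (z - t) < dl -> Rabs (w - t) < dl ->
   Rabs (f x - f y) * Rabs (g z - g w) <= eta).
 assert (Hex : forall t, exists dl : posreal, Q t dl).
 { intros t. destruct (classic (a <= t <= b)) as [Ht|Ht].
   2:{ exists (mkposreal 1 Rlt_0_1). intros H; contradiction. }
   destruct (Hc t Ht) as [Hft|Hgt].
   - destruct (Hft (eta / (2 * Mg))) as [dl [Hdl Hd]]. apply Rdiv_lt_0_compat; lra.
     exists (mkposreal dl Hdl). intros _ x y z w Hx Hy Hz Hw Hxt Hyt Hzt Hwt. simpl in *.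
     assert (H1 := two_close f t x y _ (Hd x Hx Hxt) (Hd y Hy Hyt)).
     assert (H2 := Hg z w Hz Hw).
     apply Rle_trans with (2 * (eta / (2 * Mg)) * Mg). apply Rmult_le_compat; auto; apply Rabs_pos.
     apply Req_le; field; lra.
   - destruct (Hgt (eta / (2 * Mf))) as [dl [Hdl Hd]]. apply Rdiv_lt_0_compat; lra.
     exists (mkposreal dl Hdl). intros _ x y z w Hx Hy Hz Hw Hxt Hyt Hzt Hwt. simpl in *.
     assert (H1 := two_close g t z w _ (Hd z Hz Hzt) (Hd w Hw Hwt)).
     assert (H2 := Hf x y Hx Hy).
     apply Rle_trans with (Mf * (2 * (eta / (2 * Mf)))). apply Rmult_le_compat; auto; apply Rabs_pos.
     apply Req_le; field; lra. }
 set (dlf := fun t => proj1_sig (constructive_indefinite_description _ (Hex t))).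
 assert (Hdlf : forall t, Q t (dlf t)) by (intros t; unfold dlf; destruct (constructive_indefinite_description _ (Hex t)); auto).
 assert (Hpos : forall t, 0 < dlf t / 2) by (intros t; apply Rdiv_lt_0_compat; [apply cond_pos|lra]).
 destruct (compactness_value_1d a b (fun t => mkposreal _ (Hpos t))) as [d Hd].
 exists d. split. apply cond_pos. intros u v Hu Hv Huv x y z w Hx Hy Hz Hw.
 assert (Hu' : a <= u <= b) by lra.
 assert (HH := Hd u Hu'). apply NNPP. intros Hn. apply HH. intros [t [Ht [Hut Hdt]]]. apply Hn. simpl in *.
 assert (Hcl : forall r, u <= r <= v -> Rabs (r - t) < dlf t).
 { intros r Hr. replace (r - t) with ((r - u) + (u - t)) by ring. eapply Rle_lt_trans. apply Rabs_triang.
   rewrite (Rabs_right (r - u)) by lra. lra. }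
 apply (Hdlf t Ht); try lra; apply Hcl; lra. Qed.

Definition Tsum (f g : R -> R) (x nu : nat -> R) l := sumR l (fun i => f (nu i) * (g (x (S i)) - g (x i))).

Lemma tagref f g dl : forall l (x nu : nat -> R),
  (forall i, (i < l)%nat -> x i < x (S i)) ->
  (forall i, (i < l)%nat -> x i <= nu i <= x (S i)) ->
  (forall i, (i < l)%nat -> x (S i) - x i < dl) ->
  exists n t rho, inc t n /\ t O = x O /\ t n = x l /\ (forall j, (j < n)%nat -> t (S j) - t j < dl) /\
    (forall j, (j < n)%nat -> rho j = t j \/ rho j = t (S j)) /\ Tsum f g x nu l = Tsum f g t rho n.
Proof.
 induction l; intros x nu Hx Hnu Hd.
 - exists O, x, nu. repeat split; auto; intros; lia.
 - destruct (IHl x nu) as [n [t [rho [Hinc [H0 [Hn [Hdt [Hrho Hs]]]]]]]]; try (intros; first [apply Hx|apply Hnu|apply Hd]; lia).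
   assert (Hxl := Hx l ltac:(lia)). assert (Hnl := Hnu l ltac:(lia)). assert (Hdl := Hd l ltac:(lia)).
   destruct (classic (nu l = x l \/ nu l = x (S l))) as [Hend|Hmid].
   + set (t' := fun j => if Nat.leb j n then t j else x (S l)).
     set (rho' := fun j => if Nat.ltb j n then rho j else nu l).
     exists (S n), t', rho'.
     assert (Et : forall j, (j <= n)%nat -> t' j = t j) by (intros j Hj; unfold t'; destruct (Nat.leb_spec j n); auto; lia).
     assert (EtS : t' (S n) = x (S l)) by (unfold t'; destruct (Nat.leb_spec (S n) n); auto; lia).
     split. intros j Hj. destruct (Nat.eq_dec j n). subst. rewrite Et, EtS by lia. rewrite Hn; auto.
       rewrite !Et by lia. apply Hinc; lia.
     split. rewrite Et by lia; auto. split. auto.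
     split. intros j Hj. destruct (Nat.eq_dec j n). subst. rewrite EtS, Et by lia. rewrite Hn; auto.
       rewrite !Et by lia. apply Hdt; lia.
     split. intros j Hj. unfold rho'. destruct (Nat.ltb_spec j n). rewrite !Et by lia. apply Hrho; auto.
       replace j with n by lia. rewrite Et, EtS by lia. rewrite Hn. tauto.
     unfold Tsum in *. cbn [sumR]. rewrite Hs. f_equal.
     apply sumR_ext. intros j Hj. unfold rho'. destruct (Nat.ltb_spec j n); try lia. rewrite !Et by lia. auto.
     unfold rho'. destruct (Nat.ltb_spec n n); try lia. rewrite EtS, Et, Hn by lia. auto.
   + set (t' := fun j => if Nat.leb j n then t j else if Nat.eqb j (S n) then nu l else x (S l)).
     set (rho' := fun j => if Nat.ltb j n then rho j else nu l).
     exists (S (S n)), t', rho'.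
     assert (Et : forall j, (j <= n)%nat -> t' j = t j) by (intros j Hj; unfold t'; destruct (Nat.leb_spec j n); auto; lia).
     assert (EtS : t' (S n) = nu l) by (unfold t'; destruct (Nat.leb_spec (S n) n); try lia; rewrite Nat.eqb_refl; auto).
     assert (EtSS : t' (S (S n)) = x (S l)).
     { unfold t'. destruct (Nat.leb_spec (S (S n)) n); try lia. destruct (Nat.eqb_spec (S (S n)) (S n)); auto; lia. }
     assert (Hm1 : x l < nu l) by (destruct Hnl as [[H|H] _]; auto; exfalso; apply Hmid; auto).
     assert (Hm2 : nu l < x (S l)) by (destruct Hnl as [_ [H|H]]; auto; exfalso; apply Hmid; auto).
     split. intros j Hj. destruct (Nat.eq_dec j (S n)). subst. rewrite EtS, EtSS; auto.
       destruct (Nat.eq_dec j n). subst. rewrite Et, EtS, Hn by lia; auto.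
       rewrite !Et by lia. apply Hinc; lia.
     split. rewrite Et by lia; auto. split. auto.
     split. intros j Hj. destruct (Nat.eq_dec j (S n)). subst. rewrite EtS, EtSS; lra.
       destruct (Nat.eq_dec j n). subst. rewrite EtS, Et, Hn by lia; lra.
       rewrite !Et by lia. apply Hdt; lia.
     split. intros j Hj. unfold rho'. destruct (Nat.ltb_spec j n). rewrite !Et by lia. apply Hrho; auto.
       destruct (Nat.eq_dec j n). subst. rewrite EtS. tauto. replace j with (S n) by lia. rewrite EtS. tauto.
     unfold Tsum in *. cbn [sumR]. rewrite Hs.
     rewrite (sumR_ext n (fun i => f (rho' i) * (g (t' (S i)) - g (t' i))) (fun i => f (rho i) * (g (t (S i)) - g (t i)))).
     2:{ intros j Hj. unfold rho'. destruct (Nat.ltb_spec j n); try lia. rewrite !Et by lia. auto. }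
     unfold rho'. destruct (Nat.ltb_spec n n); try lia. destruct (Nat.ltb_spec (S n) n); try lia.
     rewrite EtS, EtSS, Et, Hn by lia. ring.
Qed.

Lemma tag_vs_left f g t rho n : (forall j, (j < n)%nat -> rho j = t j \/ rho j = t (S j)) ->
  Rabs (Tsum f g t rho n - Lsum f g t n) <= sumR n (fun j => Rabs (f (t (S j)) - f (t j)) * Rabs (g (t (S j)) - g (t j))).
Proof. intros H. unfold Tsum, Lsum. rewrite <- sumR_minus. eapply Rle_trans. apply sumR_abs.
 apply sumR_le. intros j Hj. destruct (H j Hj) as [E|E]; rewrite E.
 replace (f (t j) * (g (t (S j)) - g (t j)) - f (t j) * (g (t (S j)) - g (t j))) with 0 by ring.
 rewrite Rabs_R0. apply Rmult_le_pos; apply Rabs_pos.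
 rewrite <- Rabs_mult. apply Req_le. f_equal. ring. Qed.

Lemma fin_choice (Q : nat -> nat -> Prop) m : (forall j, (j <= m)%nat -> exists i, Q j i) ->
  exists s, forall j, (j <= m)%nat -> Q j (s j).
Proof. induction m; intros H.
 - destruct (H O (le_n O)) as [i Hi]. exists (fun _ => i). intros j Hj. replace j with O by lia; auto.
 - destruct IHm as [s Hs]. intros; apply H; lia. destruct (H (S m) (le_n _)) as [i Hi].
   exists (fun j => if Nat.eqb j (S m) then i else s j). intros j Hj.
   destruct (Nat.eqb_spec j (S m)). subst; auto. apply Hs; lia. Qed.

Lemma inc_inj t n i j : inc t n -> (i <= n)%nat -> (j <= n)%nat -> t i = t j -> i = j.
Proof. intros H Hi Hj E. destruct (Nat.lt_total i j) as [L|[L|L]]; auto.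
 assert (t i < t j) by (apply (inc_mono t n); auto). lra.
 assert (t j < t i) by (apply (inc_mono t n); auto). lra. Qed.

Lemma inc_reflect t n i j : inc t n -> (i <= n)%nat -> (j <= n)%nat -> t i < t j -> (i < j)%nat.
Proof. intros H Hi Hj E. destruct (Nat.lt_ge_cases i j); auto.
 assert (t j <= t i) by (apply (inc_mono_le t n); auto). lra. Qed.

Lemma St_of_range R n P m : inc R n -> inc P m -> R O = P O -> R n = P m ->
  (forall j, (j <= m)%nat -> exists i, (i <= n)%nat /\ R i = P j) -> exists s, St R n s m P.
Proof. intros HR HP H0 Hn Hr. destruct (fin_choice (fun j i => (i <= n)%nat /\ R i = P j) m Hr) as [s Hs].
 exists s. split; auto. split.
 - intros j Hj. destruct (Hs j ltac:(lia)) as [H1 E1]. destruct (Hs (S j) ltac:(lia)) as [H2 E2].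
   apply (inc_reflect R n); auto. rewrite E1, E2. apply HP; auto.
 - split. destruct (Hs O ltac:(lia)) as [H1 E1]. apply (inc_inj R n); auto; try lia. rewrite E1; auto.
   split. destruct (Hs m ltac:(lia)) as [H1 E1]. apply (inc_inj R n); auto. rewrite E1; auto.
   intros j Hj. apply Hs; auto. Qed.

Lemma locate t n u : t O <= u -> u <= t n -> (exists i, (i <= n)%nat /\ t i = u) \/ (exists i, (i < n)%nat /\ t i < u < t (S i)).
Proof. induction n; intros H1 H2.
 - left. exists O; split; auto; lra.
 - destruct (Rle_lt_dec u (t n)) as [H|H].
   + destruct (IHn H1 H) as [[i [Hi E]]|[i [Hi E]]]. left; exists i; split; auto; lia. right; exists i; split; auto; lia.
   + destruct (Req_dec u (t (S n))) as [E|E]. left; exists (S n); split; auto.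
     right; exists n; split. lia. lra. Qed.

Lemma insert t n u : inc t n -> t O <= u -> u <= t n ->
  exists t' n', inc t' n' /\ t' O = t O /\ t' n' = t n /\ (forall i, (i <= n)%nat -> exists i', (i' <= n')%nat /\ t' i' = t i) /\
   (exists i', (i' <= n')%nat /\ t' i' = u).
Proof. intros Hinc H1 H2. destruct (locate t n u H1 H2) as [[i [Hi E]]|[i [Hi E]]].
 - exists t, n. repeat split; auto. intros j Hj; exists j; split; auto. exists i; split; auto.
 - set (t' := fun j => if Nat.leb j i then t j else if Nat.eqb j (S i) then u else t (pred j)).
   assert (E1 : forall j, (j <= i)%nat -> t' j = t j) by (intros j Hj; unfold t'; destruct (Nat.leb_spec j i); auto; lia).
   assert (E2 : t' (S i) = u) by (unfold t'; destruct (Nat.leb_spec (S i) i); try lia; rewrite Nat.eqb_refl; auto).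
   assert (E3 : forall j, (i < j)%nat -> t' (S j) = t j).
   { intros j Hj; unfold t'. destruct (Nat.leb_spec (S j) i); try lia. destruct (Nat.eqb_spec (S j) (S i)); try lia. auto. }
   exists t', (S n). split.
   + intros j Hj. destruct (Nat.lt_total j i) as [L|[L|L]].
     rewrite !E1 by lia. apply Hinc; lia.
     rewrite L. rewrite E2, E1 by lia. lra.
     destruct j. lia. destruct (Nat.eq_dec j i). rewrite e. rewrite (E3 (S i)) by lia. rewrite E2. lra.
     rewrite !E3 by lia. apply Hinc; lia.
   + split. rewrite E1 by lia; auto. split. rewrite E3 by lia; auto. split.
     intros j Hj. destruct (Nat.le_gt_cases j i). exists j; split. lia. apply E1; auto.
     exists (S j); split. lia. apply E3; auto.
     exists (S i); split. lia. auto. Qed.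

Lemma merge t1 n1 t2 n2 : inc t1 n1 -> inc t2 n2 -> t1 O = t2 O -> t1 n1 = t2 n2 ->
  exists R n s1 s2, St R n s1 n1 t1 /\ St R n s2 n2 t2.
Proof. intros H1 H2 E0 En.
 assert (Main : forall k, (k <= n2)%nat -> exists R n, inc R n /\ R O = t1 O /\ R n = t1 n1 /\
   (forall j, (j <= n1)%nat -> exists i, (i <= n)%nat /\ R i = t1 j) /\
   (forall j, (j <= k)%nat -> exists i, (i <= n)%nat /\ R i = t2 j)).
 { induction k; intros Hk.
   - exists t1, n1. repeat split; auto. intros j Hj; exists j; split; auto. intros j Hj. replace j with O by lia. exists O; split; auto; lia.
   - destruct (IHk ltac:(lia)) as [R [n [HR [HR0 [HRn [Hr1 Hr2]]]]]].
     destruct (insert R n (t2 (S k)) HR) as [R' [n' [HR' [HR0' [HRn' [Hmap Hu]]]]]].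
     rewrite HR0, E0. apply (inc_mono_le t2 n2); auto; lia.
     rewrite HRn, En. apply (inc_mono_le t2 n2); auto; lia.
     exists R', n'. split; auto. split. rewrite HR0'; auto. split. rewrite HRn'; auto. split.
     intros j Hj. destruct (Hr1 j Hj) as [i [Hi Ei]]. destruct (Hmap i Hi) as [i' [Hi' Ei']]. exists i'; split; auto; congruence.
     intros j Hj. destruct (Nat.eq_dec j (S k)). subst. auto.
     destruct (Hr2 j ltac:(lia)) as [i [Hi Ei]]. destruct (Hmap i Hi) as [i' [Hi' Ei']]. exists i'; split; auto; congruence. }
 destruct (Main n2 (le_n _)) as [R [n [HR [HR0 [HRn [Hr1 Hr2]]]]]].
 destruct (St_of_range R n t1 n1 HR H1 HR0 HRn Hr1) as [s1 Hs1].
 destruct (St_of_range R n t2 n2 HR H2 ltac:(congruence) ltac:(congruence) Hr2) as [s2 Hs2].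
 exists R, n, s1, s2; auto. Qed.

Lemma block t n s m P i : St t n s m P -> (0 < i < n)%nat -> kb s m i = false ->
  exists j, (j < m)%nat /\ (s j < i < s (S j))%nat.
Proof. intros [Hinc [Hs [H0 [Hm HP]]]] Hi Hk. assert (Hne := kb_false s m i Hk).
 assert (G : forall r k, (k + r = m)%nat -> (s k < i)%nat -> exists j, (j < m)%nat /\ (s j < i < s (S j))%nat).
 { induction r; intros k Hkr Hsk. replace k with m in Hsk by lia. lia.
   assert (Hne1 := Hne (S k) ltac:(lia)).
   destruct (Nat.lt_ge_cases i (s (S k))). exists k; split. lia. lia.
   apply (IHr (S k)). lia. lia. }
 apply (G m O). lia. lia. Qed.

Lemma fixed_greedy N (u v c psi : nat -> R) A B :
  (forall j, (j < N)%nat -> 0 <= u j /\ 0 <= v j /\ 0 <= c j) ->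
  sumR N u <= A -> sumR N v <= B -> 0 <= A -> 0 <= B -> (forall k, 0 <= psi k) ->
  (forall j, (j < N)%nat -> u j = 0 -> c j = 0) -> (forall j, (j < N)%nat -> v j = 0 -> c j = 0) ->
  (forall j k, (j < N)%nat -> (1 <= k)%nat -> u j <= 2 * A / INR k -> v j <= 2 * B / INR k -> c j <= psi k) ->
  forall K (Rb : nat -> bool), sumR N (fun j => if Rb j then 0 else 1) = INR K ->
  sumR N (fun j => if Rb j then 0 else c j) <= sumR K (fun i => psi (S i)).
Proof.
 intros Hpos Hu Hv HA HB Hpsi Hu0 Hv0 Hb K. induction K; intros Rb Hc.
 - simpl. assert (E : sumR N (fun j => if Rb j then 0 else c j) = 0).
   { transitivity (sumR N (fun _ => 0)); [|rewrite sumR_const; ring]. apply sumR_ext. intros j Hj.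
     destruct (Rb j) eqn:E; auto. exfalso.
     assert (0 < sumR N (fun j => if Rb j then 0 else 1)). apply sumR_pos. intros i _; destruct (Rb i); lra.
     exists j; split; auto. rewrite E; lra. simpl in Hc; lra. } lra.
 - destruct (pigeon N (fun j => u j * B + v j * A) Rb (2 * A * B) (INR (S K))) as [j [Hj [Hrb Hw]]].
   { intros j Hj. destruct (Hpos j Hj) as [H1 [H2 _]]. apply Rplus_le_le_0_compat; apply Rmult_le_pos; auto. }
   { apply Rmult_le_pos; lra. }
   { rewrite sumR_plus. rewrite (sumR_ext N (fun i => u i * B) (fun i => B * u i)) by (intros; ring).
     rewrite (sumR_ext N (fun i => v i * A) (fun i => A * v i)) by (intros; ring). rewrite !sumR_scal.
     assert (B * sumR N u <= B * A) by (apply Rmult_le_compat_l; auto).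
     assert (A * sumR N v <= A * B) by (apply Rmult_le_compat_l; auto). lra. }
   { rewrite S_INR. assert (0 <= INR K) by apply pos_INR. lra. }
   { rewrite Hc. lra. }
   destruct (Hpos j Hj) as [Hu1 [Hv1 Hc1]].
   assert (Hcj : c j <= psi (S K)).
   { assert (HuA : u j <= A). { eapply Rle_trans; [|apply Hu]. apply (sumR_term N u j); auto. intros i Hi; apply Hpos; auto. }
     assert (HvB : v j <= B). { eapply Rle_trans; [|apply Hv]. apply (sumR_term N v j); auto. intros i Hi; apply Hpos; auto. }
     destruct (Req_dec A 0) as [EA|NA]. rewrite Hu0; auto. lra.
     destruct (Req_dec B 0) as [EB|NB]. rewrite Hv0; auto. lra.
     assert (Hk : 0 < INR (S K)) by apply INR_S_pos.
     apply Hb; auto. lia.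
     + apply Rmult_le_reg_r with (INR (S K) * B). apply Rmult_lt_0_compat; lra.
       unfold Rdiv. replace (2 * A * / INR (S K) * (INR (S K) * B)) with (2 * A * B) by (field; lra).
       assert (0 <= INR (S K) * (v j * A)) by (apply Rmult_le_pos; [lra|apply Rmult_le_pos; lra]).
       assert (INR (S K) * (u j * B + v j * A) = u j * (INR (S K) * B) + INR (S K) * (v j * A)) by ring. lra.
     + apply Rmult_le_reg_r with (INR (S K) * A). apply Rmult_lt_0_compat; lra.
       unfold Rdiv. replace (2 * B * / INR (S K) * (INR (S K) * A)) with (2 * A * B) by (field; lra).
       assert (0 <= INR (S K) * (u j * B)) by (apply Rmult_le_pos; [lra|apply Rmult_le_pos; lra]).
       assert (INR (S K) * (u j * B + v j * A) = v j * (INR (S K) * A) + INR (S K) * (u j * B)) by ring. lra. }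
   set (Rb' := fun i => if Nat.eqb i j then true else Rb i).
   assert (Esplit : forall (F : nat -> R), sumR N (fun i => if Rb i then 0 else F i) = sumR N (fun i => if Rb' i then 0 else F i) + F j).
   { intros F. destruct N. lia. rewrite !(sumR_remove N j) by lia. unfold Rb'. rewrite Nat.eqb_refl, Hrb.
     rewrite Rplus_0_r. f_equal. apply sumR_ext. intros i Hi.
     destruct (Nat.ltb_spec i j); [destruct (Nat.eqb_spec i j)|destruct (Nat.eqb_spec (S i) j)]; auto; lia. }
   assert (Hc' : sumR N (fun i => if Rb' i then 0 else 1) = INR K).
   { assert (E := Esplit (fun _ => 1)). cbv beta in E. rewrite Hc, S_INR in E. lra. }
   assert (IH := IHK Rb' Hc'). rewrite (Esplit c). cbn [sumR]. lra.
Qed.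

Lemma min_interp x y th : 0 <= x -> 0 <= y -> 0 < th < 1 -> Rmin x y <= rpow x (1 - th) * rpow y th.
Proof. intros Hx Hy Hth. destruct (Req_dec x 0). subst. rewrite Rmin_left by auto. rewrite rpow_0. lra.
 destruct (Req_dec y 0). subst. rewrite Rmin_right by auto. rewrite rpow_0. lra.
 destruct (Rle_lt_dec x y).
 - rewrite Rmin_left by auto. rewrite <- (rpow_1 x) at 1 by lra. replace 1 with ((1 - th) + th) at 1 by ring.
   rewrite rpow_plus by lra. apply Rmult_le_compat_l. apply rpow_ge0. apply rpow_le; lra.
 - rewrite Rmin_right by lra. rewrite <- (rpow_1 y) at 1 by lra. replace 1 with ((1 - th) + th) at 1 by ring.
   rewrite rpow_plus by lra. apply Rmult_le_compat_r. apply rpow_ge0. apply rpow_le; lra. Qed.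

Definition psiF eta Z s k := Rmin eta (Z * rpow (INR k) (- s)).
Definition Phi eta Z s := let th := (1 + s) / (2 * s) in let sg := (1 + s) / 2 in
  rpow eta (1 - th) * rpow Z th * (sg / (sg - 1)).

Lemma psi_sum eta Z s K : 0 <= eta -> 0 <= Z -> 1 < s -> sumR K (fun i => psiF eta Z s (S i)) <= Phi eta Z s.
Proof. intros He HZ Hs. unfold Phi. set (th := (1 + s) / (2 * s)). set (sg := (1 + s) / 2).
 assert (Hth : 0 < th < 1). { unfold th. split. apply Rdiv_lt_0_compat; lra. apply Rmult_lt_reg_r with (2 * s). lra. unfold Rdiv. rewrite Rmult_assoc, Rinv_l; lra. }
 assert (Hsg : sg = s * th) by (unfold sg, th; field; lra).
 apply Rle_trans with (sumR K (fun i => rpow eta (1 - th) * rpow Z th * rpow (INR (S i)) (- sg))).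
 - apply sumR_le. intros i _. unfold psiF. eapply Rle_trans. apply (min_interp _ _ th); auto. apply Rmult_le_pos; auto; apply rpow_ge0.
   rewrite rpow_mult by (auto; apply rpow_ge0). rewrite rpow_rpow by (left; apply INR_S_pos).
   replace (- s * th) with (- sg) by (rewrite Hsg; ring). apply Req_le; ring.
 - rewrite sumR_scal. apply Rmult_le_compat_l. apply Rmult_le_pos; apply rpow_ge0. apply sum_pow_big. unfold sg; lra. Qed.

Lemma cost_bound p q A B df dg k : 0 < p -> 0 < q -> 0 <= A -> 0 <= B -> (1 <= k)%nat ->
  rpow (Rabs df) p <= 2 * A / INR k -> rpow (Rabs dg) q <= 2 * B / INR k ->
  Rabs df * Rabs dg <= rpow (2 * A) (/ p) * rpow (2 * B) (/ q) * rpow (INR k) (- (/ p + / q)).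
Proof. intros Hp Hq HA HB Hk Hu Hv. assert (Hk' : 0 < INR k) by (apply lt_0_INR; lia).
 apply rpow_inv_le in Hu; [|apply Rabs_pos|lra]. rewrite rpow_scale_k in Hu by (auto; lra).
 apply rpow_inv_le in Hv; [|apply Rabs_pos|lra]. rewrite rpow_scale_k in Hv by (auto; lra).
 rewrite Ropp_plus_distr, rpow_plus by lra.
 replace (rpow (2 * A) (/ p) * rpow (2 * B) (/ q) * (rpow (INR k) (- / p) * rpow (INR k) (- / q))) with
   ((rpow (2 * A) (/ p) * rpow (INR k) (- / p)) * (rpow (2 * B) (/ q) * rpow (INR k) (- / q))) by ring.
 apply Rmult_le_compat; auto; apply Rabs_pos. Qed.

Definition etaP (f g : R -> R) a b eta d := forall u v, a <= u -> v <= b -> v - u < d ->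
  forall x y z w, u <= x <= v -> u <= y <= v -> u <= z <= v -> u <= w <= v ->
  Rabs (f x - f y) * Rabs (g z - g w) <= eta.

Lemma stepB (f g : R -> R) a b p q A B eta d t n : 1 < p -> 1 < q -> 1 < / p + / q ->
  (forall t n, inc t n -> a <= t O -> t n <= b -> psum p f t n <= A) ->
  (forall t n, inc t n -> a <= t O -> t n <= b -> psum q g t n <= B) ->
  0 <= A -> 0 <= B -> 0 <= eta -> etaP f g a b eta d ->
  inc t n -> t O = a -> t n = b -> (forall j, (j < n)%nat -> t (S j) - t j < d) ->
  sumR n (fun j => Rabs (f (t (S j)) - f (t j)) * Rabs (g (t (S j)) - g (t j)))
  <= Phi eta (rpow (2 * A) (/ p) * rpow (2 * B) (/ q)) (/ p + / q).
Proof. intros Hp Hq Hs HA HB HA0 HB0 He Heta Hinc H0 Hn Hd.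
 set (Z := rpow (2 * A) (/ p) * rpow (2 * B) (/ q)).
 assert (HZ : 0 <= Z) by (apply Rmult_le_pos; apply rpow_ge0).
 assert (Hin : forall j, (j <= n)%nat -> a <= t j <= b).
 { intros j Hj. split. rewrite <- H0. apply (inc_mono_le t n); auto; lia. rewrite <- Hn. apply (inc_mono_le t n); auto; lia. }
 assert (G := fixed_greedy n (fun j => rpow (Rabs (f (t (S j)) - f (t j))) p) (fun j => rpow (Rabs (g (t (S j)) - g (t j))) q)
   (fun j => Rabs (f (t (S j)) - f (t j)) * Rabs (g (t (S j)) - g (t j))) (psiF eta Z (/ p + / q)) A B).
 eapply Rle_trans. apply G with (K := n) (Rb := fun _ : nat => false).
 - intros j _. split. apply rpow_ge0. split. apply rpow_ge0. apply Rmult_le_pos; apply Rabs_pos.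
 - apply HA; auto; lra.
 - apply HB; auto; lra.
 - auto. - auto.
 - intros k. unfold psiF. apply Rmin_glb; auto. apply Rmult_le_pos; auto; apply rpow_ge0.
 - intros j Hj Hu. simpl in Hu. assert (Hz := rpow_eq0 _ _ (Rabs_pos _) (Req_le _ _ Hu)). simpl. rewrite Hz; ring.
 - intros j Hj Hv. simpl in Hv. assert (Hz := rpow_eq0 _ _ (Rabs_pos _) (Req_le _ _ Hv)). simpl. rewrite Hz; ring.
 - intros j k Hj Hk Hu Hv. unfold psiF. apply Rmin_glb.
   + apply (Heta (t j) (t (S j))); try apply Hd; auto; try apply Hin; try lia; try lra.
     split; [left; apply Hinc; auto|lra]. split; [lra|left; apply Hinc; auto].
     split; [left; apply Hinc; auto|lra]. split; [lra|left; apply Hinc; auto].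
   + apply cost_bound; auto; lra.
 - simpl. rewrite sumR_const; ring.
 - apply psi_sum; auto. Qed.

Lemma stepD (f g : R -> R) a b p q A B eta d R n s m P : 1 < p -> 1 < q -> 1 < / p + / q ->
  (forall t n, inc t n -> a <= t O -> t n <= b -> psum p f t n <= A) ->
  (forall t n, inc t n -> a <= t O -> t n <= b -> psum q g t n <= B) ->
  0 <= A -> 0 <= B -> 0 <= eta -> etaP f g a b eta d ->
  St R n s m P -> inc P m -> P O = a -> P m = b -> (forall j, (j < m)%nat -> P (S j) - P j < d) ->
  Rabs (Lsum f g R n - Lsum f g P m) <= Phi eta (rpow (2 * A) (/ p) * rpow (2 * B) (/ q)) (/ p + / q).
Proof. intros Hp Hq Hs HA HB HA0 HB0 He Heta HSt HP H0 Hm Hd.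
 set (Z := rpow (2 * A) (/ p) * rpow (2 * B) (/ q)).
 assert (HZ : 0 <= Z) by (apply Rmult_le_pos; apply rpow_ge0).
 destruct (count_nat (S n) (kb s m)) as [K HK].
 eapply Rle_trans. apply (greedy f g a b p q A B P m (psiF eta Z (/ p + / q))) with (K := K) (s := s); auto.
 - intros k. unfold psiF. apply Rmin_glb; auto. apply Rmult_le_pos; auto; apply rpow_ge0.
 - lra. - lra.
 - intros t0 n0 s0 i k HSt0 Hk Hi Hkb Hu Hv. rewrite Rabs_mult. unfold psiF. apply Rmin_glb.
   + destruct (block t0 n0 s0 m P i HSt0 Hi Hkb) as [j [Hj Hji]].
     destruct HSt0 as [Hinc [Hs0 [H00 [Hm0 HP0]]]].
     assert (L1 : t0 (s0 j) <= t0 (i - 1)%nat) by (apply (inc_mono_le t0 n0); auto; lia).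
     assert (L2 : t0 (S i) <= t0 (s0 (S j))).
     { apply (inc_mono_le t0 n0); auto. lia. rewrite <- Hm0. destruct (Nat.eq_dec (S j) m). subst; lia.
       apply Nat.lt_le_incl, (smono s0 m); auto; lia. }
     assert (L3 : t0 (i - 1)%nat < t0 i) by (replace i with (S (i - 1)) at 2 by lia; apply Hinc; lia).
     assert (L4 : t0 i < t0 (S i)) by (apply Hinc; lia).
     rewrite HP0 in L1, L2 by lia.
     assert (a <= P j) by (rewrite <- H0; apply (inc_mono_le P m); auto; lia).
     assert (P (S j) <= b) by (rewrite <- Hm; apply (inc_mono_le P m); auto; lia).
     apply (Heta (P j) (P (S j))); auto; try lra.
   + apply cost_bound; auto; lra.
 - apply psi_sum; auto. Qed.

Lemma Phi_small Z s eps : 0 <= Z -> 1 < s -> 0 < eps -> exists eta, 0 < eta /\ Phi eta Z s < eps.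
Proof. intros HZ Hs He. unfold Phi. set (th := (1 + s) / (2 * s)). set (sg := (1 + s) / 2).
 assert (Hth : 0 < th < 1). { unfold th. split. apply Rdiv_lt_0_compat; lra. apply Rmult_lt_reg_r with (2 * s). lra. unfold Rdiv. rewrite Rmult_assoc, Rinv_l; lra. }
 set (W := rpow Z th * (sg / (sg - 1))).
 assert (HW : 0 <= W). { unfold W. apply Rmult_le_pos. apply rpow_ge0. unfold sg. apply Rlt_le, Rdiv_lt_0_compat; lra. }
 set (c := eps / (W + 1)). assert (Hc : 0 < c) by (unfold c; apply Rdiv_lt_0_compat; lra).
 exists (rpow c (/ (1 - th))). split. apply rpow_gt0; auto.
 rewrite rpow_rpow by lra. replace (/ (1 - th) * (1 - th)) with 1 by (field; lra). rewrite rpow_1 by lra.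
 replace (c * rpow Z th * (sg / (sg - 1))) with (c * W) by (unfold W; ring).
 unfold c. apply Rmult_lt_reg_r with (W + 1). lra. unfold Rdiv. replace (eps * / (W + 1) * W * (W + 1)) with (eps * W) by (field; lra).
 nra. Qed.

Definition xU a b N := fun i => a + INR i * (b - a) / INR (S N).

Lemma xU_props a b N : a < b ->
  xU a b N O = a /\ xU a b N (S N) = b /\ (forall i, xU a b N (S i) - xU a b N i = (b - a) / INR (S N)).
Proof. intros Hab. assert (HN : 0 < INR (S N)) by apply INR_S_pos. unfold xU. split. change (INR 0) with 0. field; lra.
 split. field; lra. intros i. rewrite S_INR. field; lra. Qed.

Lemma small_mesh a b dl : a < b -> 0 < dl -> exists N0, forall N, (N0 <= N)%nat -> (b - a) / INR (S N) < dl.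
Proof. intros Hab Hd. destruct (ceil_nat ((b - a) / dl)) as [K [HK _]]. apply Rlt_le, Rdiv_lt_0_compat; lra.
 exists K. intros N HN. assert (INR K <= INR N) by (apply le_INR; auto).
 assert (HS : INR (S N) = INR N + 1) by apply S_INR.
 apply Rmult_lt_reg_r with (INR (S N)). apply INR_S_pos. unfold Rdiv. rewrite Rmult_assoc, Rinv_l by (apply Rgt_not_eq, INR_S_pos).
 assert ((b - a) / dl < INR (S N)) by lra.
 apply Rmult_lt_reg_r with (/ dl). apply Rinv_0_lt_compat; lra. replace (dl * INR (S N) * / dl) with (INR (S N)) by (field; lra). lra. Qed.

Lemma Rabs_le_betw x e : Rabs x <= e -> - e <= x <= e.
Proof. intros H. unfold Rabs in H. destruct (Rcase_abs x); split; lra. Qed.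

Theorem corollary2 (p q : R) (hp : 1 < p) (hq : 1 < q) (hpq : / p + / q > 1) :
  exists C : R,
    forall (a b : R) (f g : R -> R),
      a < b ->
      (forall x, a <= x <= b -> cont_in f a b x \/ cont_in g a b x) ->
      finite_rvar p f a b ->
      finite_rvar q g a b ->
      exists I : R,
        is_RS_integral f g a b I /\
        Rabs (I - f a * (g b - g a)) <=
          C * rpow (rvar_norm p f a b) (p - p / q)
            * rpow (osc_norm f a b) (1 + p / q - p)
            * rvar_norm q g a b.
Proof.
 exists (Cyoung p q). intros a b f g hab hcont hfp hgq.
 set (A := real (rvar p f a b)). set (B := real (rvar q g a b)). set (Om := osc_norm f a b).
 assert (HA : forall t n, inc t n -> a <= t O -> t n <= b -> psum p f t n <= A) by (intros; apply rvar_ub; auto).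
 assert (HB : forall t n, inc t n -> a <= t O -> t n <= b -> psum q g t n <= B) by (intros; apply rvar_ub; auto).
 assert (HA0 : 0 <= A) by (apply rvar_ge0; auto; lra).
 assert (HB0 : 0 <= B) by (apply rvar_ge0; auto; lra).
 destruct (osc_props p f a b ltac:(lra) hab hfp) as [HO0 [HO HOA]]. fold Om in HO0, HO, HOA.
 assert (Hs : 1 < / p + / q) by lra.
 set (Z := rpow (2 * A) (/ p) * rpow (2 * B) (/ q)).
 assert (HZ : 0 <= Z) by (apply Rmult_le_pos; apply rpow_ge0).
 assert (HMg : forall x y, a <= x <= b -> a <= y <= b -> Rabs (g x - g y) <= rpow B (/ q) + 1).
 { intros x y Hx Hy. assert (H := diff_bound q g a b x y ltac:(lra) hgq Hx Hy). fold B in H. lra. }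
 assert (HMf : forall x y, a <= x <= b -> a <= y <= b -> Rabs (f x - f y) <= Om + 1).
 { intros x y Hx Hy. assert (H := HO x y Hx Hy). lra. }
 assert (Hcauchy : forall eps, 0 < eps -> exists dl, 0 < dl /\
   forall l1 x1 nu1 l2 x2 nu2,
     x1 O = a -> x1 l1 = b -> (forall i, (i < l1)%nat -> x1 i < x1 (S i)) ->
     (forall i, (i < l1)%nat -> x1 i <= nu1 i <= x1 (S i)) -> (forall i, (i < l1)%nat -> x1 (S i) - x1 i < dl) ->
     x2 O = a -> x2 l2 = b -> (forall i, (i < l2)%nat -> x2 i < x2 (S i)) ->
     (forall i, (i < l2)%nat -> x2 i <= nu2 i <= x2 (S i)) -> (forall i, (i < l2)%nat -> x2 (S i) - x2 i < dl) ->
     Rabs (Tsum f g x1 nu1 l1 - Tsum f g x2 nu2 l2) < eps).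
 { intros eps Heps. destruct (Phi_small Z (/ p + / q) (eps / 4)) as [eta [Heta HPhi]]; auto; try lra.
   assert (HBq : 0 < rpow B (/ q) + 1) by (assert (0 <= rpow B (/ q)) by apply rpow_ge0; lra).
   destruct (eta_lemma f g a b (Om + 1) (rpow B (/ q) + 1) ltac:(lra) HBq HMf HMg hcont eta Heta) as [d [Hd Hetad]].
   exists d. split; auto.
   intros l1 x1 nu1 l2 x2 nu2 H10 H1l H1i H1t H1m H20 H2l H2i H2t H2m.
   destruct (tagref f g d l1 x1 nu1 H1i H1t H1m) as [n1 [t1 [r1 [T1i [T10 [T1n [T1d [T1r T1s]]]]]]]].
   destruct (tagref f g d l2 x2 nu2 H2i H2t H2m) as [n2 [t2 [r2 [T2i [T20 [T2n [T2d [T2r T2s]]]]]]]].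
   rewrite H10 in T10. rewrite H1l in T1n. rewrite H20 in T20. rewrite H2l in T2n.
   assert (E1 := tag_vs_left f g t1 r1 n1 T1r).
   assert (E1' := stepB f g a b p q A B eta d t1 n1 hp hq Hs HA HB HA0 HB0 ltac:(lra) Hetad T1i T10 T1n T1d).
   assert (E2 := tag_vs_left f g t2 r2 n2 T2r).
   assert (E2' := stepB f g a b p q A B eta d t2 n2 hp hq Hs HA HB HA0 HB0 ltac:(lra) Hetad T2i T20 T2n T2d).
   destruct (merge t1 n1 t2 n2 T1i T2i ltac:(congruence) ltac:(congruence)) as [R [n [s1 [s2 [HS1 HS2]]]]].
   assert (D1 := stepD f g a b p q A B eta d R n s1 n1 t1 hp hq Hs HA HB HA0 HB0 ltac:(lra) Hetad HS1 T1i T10 T1n T1d).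
   assert (D2 := stepD f g a b p q A B eta d R n s2 n2 t2 hp hq Hs HA HB HA0 HB0 ltac:(lra) Hetad HS2 T2i T20 T2n T2d).
   fold Z in E1', E2', D1, D2. rewrite T1s, T2s.
   set (a1 := Tsum f g t1 r1 n1 - Lsum f g t1 n1) in *. set (a4 := Tsum f g t2 r2 n2 - Lsum f g t2 n2) in *.
   set (a2 := Lsum f g R n - Lsum f g t1 n1) in *. set (a3 := Lsum f g R n - Lsum f g t2 n2) in *.
   assert (K1 := Rabs_le_betw a1 _ (Rle_trans _ _ _ E1 E1')). assert (K4 := Rabs_le_betw a4 _ (Rle_trans _ _ _ E2 E2')).
   assert (K2 := Rabs_le_betw a2 _ D1). assert (K3 := Rabs_le_betw a3 _ D2).
   replace (Tsum f g t1 r1 n1 - Tsum f g t2 r2 n2) with (a1 - a2 + a3 - a4) by (unfold a1, a2, a3, a4; ring).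
   apply Rabs_def1; lra. }
 set (u := fun N => Tsum f g (xU a b N) (xU a b N) (S N)).
 assert (HxU : forall N, xU a b N O = a /\ xU a b N (S N) = b /\ (forall i, (i < S N)%nat -> xU a b N i < xU a b N (S i)) /\
   (forall i, (i < S N)%nat -> xU a b N i <= xU a b N i <= xU a b N (S i))).
 { intros N. destruct (xU_props a b N hab) as [H0 [H1 H2]].
   assert (0 < (b - a) / INR (S N)) by (apply Rdiv_lt_0_compat; [lra|apply INR_S_pos]).
   split; auto. split; auto. split. intros i _. specialize (H2 i). lra. intros i _. specialize (H2 i). lra. }
 assert (Hcc : Cauchy_crit u).
 { intros eps Heps. destruct (Hcauchy eps Heps) as [dl [Hdl Hc]]. destruct (small_mesh a b dl hab Hdl) as [N0 HN0].
   exists N0. intros N M HN HM. unfold Rdist, u.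
   destruct (HxU N) as [A0 [A1 [A2 A3]]]. destruct (HxU M) as [B0 [B1 [B2 B3]]].
   apply Hc; auto.
   intros i _. rewrite (proj2 (proj2 (xU_props a b N hab))). apply HN0; auto.
   intros i _. rewrite (proj2 (proj2 (xU_props a b M hab))). apply HN0; auto. }
 destruct (Rcomplete.R_complete u Hcc) as [I HI].
 exists I. split.
 - intros eps Heps. destruct (Hcauchy (eps / 2) ltac:(lra)) as [dl [Hdl Hc]]. exists dl. split; auto.
   intros l x nu Hx0 Hxl Hinc Htag Hmesh.
   destruct (small_mesh a b dl hab Hdl) as [N0 HN0]. destruct (HI (eps / 2) ltac:(lra)) as [N1 HN1].
   set (N := max N0 N1). assert (HN1' := HN1 N ltac:(unfold N; lia)). unfold Rdist in HN1'.
   destruct (HxU N) as [A0 [A1 [A2 A3]]].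
   assert (Hd := Hc l x nu (S N) (xU a b N) (xU a b N) Hx0 Hxl Hinc Htag Hmesh A0 A1 A2 A3).
   assert (Hd' : Rabs (Tsum f g x nu l - u N) < eps / 2).
   { apply Hd. intros i _. rewrite (proj2 (proj2 (xU_props a b N hab))). apply HN0; unfold N; lia. }
   fold (Tsum f g x nu l).
   replace (Tsum f g x nu l - I) with ((Tsum f g x nu l - u N) + (u N - I)) by ring.
   eapply Rle_lt_trans. apply Rabs_triang. lra.
 - assert (Hu : forall N, Rabs (u N - f a * (g b - g a)) <= Cyoung p q * (rpow Om (1 - p * (1 - / q)) * rpow A (1 - / q) * rpow B (/ q))).
   { intros N. destruct (HxU N) as [A0 [A1 [A2 A3]]].
     apply (F1 f g a b p q A B Om (xU a b N) (S N)); auto. lia. }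
   set (CK := Cyoung p q * (rpow Om (1 - p * (1 - / q)) * rpow A (1 - / q) * rpow B (/ q))) in Hu.
   assert (HI' : Rabs (I - f a * (g b - g a)) <= CK).
   { apply Rnot_lt_le. intros Hlt. destruct (HI (Rabs (I - f a * (g b - g a)) - CK) ltac:(lra)) as [N1 HN1].
     assert (H1 := HN1 N1 (le_n _)). assert (H2 := Hu N1). unfold Rdist in H1.
     assert (H3 := Rabs_triang (I - u N1) (u N1 - f a * (g b - g a))).
     replace (I - u N1 + (u N1 - f a * (g b - g a))) with (I - f a * (g b - g a)) in H3 by ring.
     rewrite Rabs_minus_sym in H1. lra. }
   eapply Rle_trans. apply HI'. unfold CK. apply Req_le.
   unfold rvar_norm. fold A B. fold Om.
   rewrite rpow_rpow by auto. replace (/ p * (p - p / q)) with (1 - / q) by (field; lra).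
   replace (1 + p / q - p) with (1 - p * (1 - / q)) by (field; lra). ring.
Qed.
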